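(* Let $H$ be a real Hilbert space, $f:H\to\mathbb{R}\cup\{+\infty\}$ a proper lower semicontinuous paraconcave function and $\bar x\in\operatorname{dom}f$ with $0\in\partial_pf(\bar x)$. Suppose $f$ is continuous at $\bar x$ and twice epi-differentiable (in the sense of Mosco) at $\bar x$ relative to $0$, that $\operatorname{qri}\big(N_M(\operatorname{gph}\partial_pf,(\bar x,0))\big)\ne\emptyset$, and that $\operatorname{Proj}_zN_M(\operatorname{gph}\partial_pf,(\bar x,0))=H$. Then the second-order optimality conditions of the first, second and third kinds at $\bar x$ are mutually equivalent.
   Context: $S_H$ is the unit sphere of $H$; weak convergence is denoted $\stackrel{w}{\to}$. Proximal subdifferential: $\zeta\in\partial_p f(x)$ iff there exist $\sigma,\delta>0$ with $f(y)\ge f(x)+\langle\zeta,y-x\rangle-\frac{\sigma}{2}\|y-x\|^2$ whenever $\|y-x\|<\delta$. $\Delta_2 f(\bar x,p,t,u):=\frac{f(\bar x+tu)-f(\bar x)-t\langle p,u\rangle}{\frac12t^2}$, $f''_-(\bar x,p,h):=\liminf_{h'\to h,\,t\downarrow0}\Delta_2f(\bar x,p,t,h')$. Mixed contingent cone: $(h,z)\in T_M(\operatorname{gph}\partial_pf,(\bar x,p))$ iff there exist $t_n\to0^+$, $h_n\to h$ in norm, $z_n\stackrel{w}{\to}z$ with $p+t_nz_n\in\partial_pf(\bar x+t_nh_n)$ for all $n$. $D^2_Mf(\bar x,p)(h):=\{z:(h,z)\in T_M(\operatorname{gph}\partial_pf,(\bar x,p))\}$. $N_M(\operatorname{gph}\partial_pf,(\bar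 x,p)):=\{(a,b):\langle a,h\rangle+\langle b,z\rangle\le0\ \forall(h,z)\in T_M(\operatorname{gph}\partial_pf,(\bar x,p))\}$; $\partial^2_Mf(\bar x,p)(h):=\{z:(z,-h)\in N_M(\operatorname{gph}\partial_pf,(\bar x,p))\}$. $\operatorname{Proj}_zS:=\{z:\exists h,(h,z)\in S\}$. For a set-valued map $G$, $\operatorname{dom}G=\{h:G(h)\ne\emptyset\}$. $\operatorname{qri}A:=\{x\in A:\overline{\operatorname{cone}}(A-x)\text{ is a linear subspace}\}$. Second-order optimality conditions at $\bar x$: first kind: $\exists\beta>0$ with $f''_-(\bar x,0,h)\ge\beta$ for all $h\in S_H$; second kind: $\exists\beta>0$ such that for every $h\in\operatorname{dom}D^2_Mf(\bar x,0)\cap S_H$ there is $z\in D^2_Mf(\bar x,0)(h)$ with $\langle z,h\rangle\ge\beta$; third kind: $\exists\beta>0$ with $\langle z,h\rangle\ge\beta$ for all $h\in S_H\cap\operatorname{dom}\partial^2_Mf(\bar x,0)$, $z\in\partial^2_Mf(\bar x,0)(h)$. $f$ is paraconcave if $f-\frac1{2\lambda}\|\cdot\|^2$ is concave for some $\lambda>0$. Twice epi-differentiability (Mosco sense) at $\bar x$ relative to $p$: there is a proper function $\phi$ such that for every $t_n\to0^+$ the epigraphs of $\Delta_2f(\bar x,p,t_n,\cdot)$ Mosco converge to $\operatorname{epi}\phi$, where $C_n\to C$ in the Mosco sense means $C$ equals both the set of norm limits of sequences $x_n\in C_n$ and the set of weak limits of subsequences $x_{n_k}\in C_{n_k}$.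 *)

(* Defs.v *)
From Stdlib Require Import Reals Lra Classical.
Open Scope R_scope.
Set Implicit Arguments.

Record HilbertSpace := {
  hcarrier :> Type;
  hzero : hcarrier;
  hadd : hcarrier -> hcarrier -> hcarrier;
  hopp : hcarrier -> hcarrier;
  hscal : R -> hcarrier -> hcarrier;
  hinner : hcarrier -> hcarrier -> R;
  hadd_assoc : forall x y z, hadd x (hadd y z) = hadd (hadd x y) z;
  hadd_comm : forall x y, hadd x y = hadd y x;
  hadd_zero : forall x, hadd hzero x = x;
  hadd_opp : forall x, hadd x (hopp x) = hzero;
  hscal_assoc : forall a b x, hscal a (hscal b x) = hscal (a * b) x;
  hscal_one : forall x, hscal 1 x = x;
  hscal_distr_r : forall a b x, hscal (a + b) x = hadd (hscal a x) (hscal b x);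
  hscal_distr_l : forall a x y, hscal a (hadd x y) = hadd (hscal a x) (hscal a y);
  hinner_sym : forall x y, hinner x y = hinner y x;
  hinner_add : forall x y z, hinner (hadd x y) z = hinner x z + hinner y z;
  hinner_scal : forall a x y, hinner (hscal a x) y = a * hinner x y;
  hinner_pos : forall x, 0 <= hinner x x;
  hinner_def : forall x, hinner x x = 0 -> x = hzero;
  hcomplete : forall u : nat -> hcarrier,
    (forall eps, 0 < eps -> exists N, forall m n, (N <= m)%nat -> (N <= n)%nat ->
        sqrt (hinner (hadd (u m) (hopp (u n))) (hadd (u m) (hopp (u n)))) < eps) ->
    exists l, Un_cv (fun n => sqrt (hinner (hadd (u n) (hopp l)) (hadd (u n) (hopp l)))) 0
}.

Arguments hzero {h}.
Arguments hadd {h}.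
Arguments hopp {h}.
Arguments hscal {h}.
Arguments hinner {h}.

Section HS.
Context {H : HilbertSpace}.

Definition hsub (x y : H) : H := hadd x (hopp y).
Definition hnorm (x : H) : R := sqrt (hinner x x).

Definition unit_sphere (h : H) : Prop := hnorm h = 1.

Definition norm_cv (u : nat -> H) (l : H) : Prop :=
  Un_cv (fun n => hnorm (hsub (u n) l)) 0.
Definition weak_cv (u : nat -> H) (l : H) : Prop :=
  forall v : H, Un_cv (fun n => hinner (u n) v) (hinner l v).

Inductive ereal := Fin (r : R) | PInf.

Definition ere_le (a b : ereal) : Prop :=
  match a, b with
  | _, PInf => True
  | PInf, Fin _ => False
  | Fin x, Fin y => x <= y
  end.
Definition ere_lt (a b : ereal) : Prop :=
  match a, b with
  | Fin _, PInf => True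
  | PInf, _ => False
  | Fin x, Fin y => x < y
  end.

Definition in_dom (f : H -> ereal) (x : H) : Prop := exists r, f x = Fin r.

Definition proper (f : H -> ereal) : Prop := exists x, in_dom f x.

Definition lsc (f : H -> ereal) : Prop :=
  forall x r, ere_lt (Fin r) (f x) ->
    exists delta, 0 < delta /\
      forall y, hnorm (hsub y x) < delta -> ere_lt (Fin r) (f y).

Definition continuous_at (f : H -> ereal) (x : H) : Prop :=
  exists fx, f x = Fin fx /\
    forall eps, 0 < eps -> exists delta, 0 < delta /\
      forall y, hnorm (hsub y x) < delta ->
        exists fy, f y = Fin fy /\ Rabs (fy - fx) < eps.

(* f is paraconcave: f - (1/(2 lambda)) ||.||^2 is concave for some lambda > 0;
   concavity of g : H -> R ∪ {+oo} means its hypograph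
   {(x, r) | r <= g x} is convex. *)
Definition paraconcave (f : H -> ereal) : Prop :=
  exists lambda, 0 < lambda /\
    forall x y t r s, 0 <= t <= 1 ->
      ere_le (Fin (r + (hnorm x)^2 / (2 * lambda))) (f x) ->
      ere_le (Fin (s + (hnorm y)^2 / (2 * lambda))) (f y) ->
      let z := hadd (hscal t x) (hscal (1 - t) y) in
      ere_le (Fin (t * r + (1 - t) * s + (hnorm z)^2 / (2 * lambda))) (f z).

Definition prox_subdiff (f : H -> ereal) (x zeta : H) : Prop :=
  exists fx, f x = Fin fx /\
  exists sigma delta, 0 < sigma /\ 0 < delta /\
    forall y, hnorm (hsub y x) < delta ->
      ere_le (Fin (fx + hinner zeta (hsub y x) - sigma / 2 * (hnorm (hsub y x))^2)) (f y).

(* second-order difference quotient Delta_2 f (xbar, p, t, u);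
   only meaningful for xbar in dom f (returns +oo otherwise). *)
Definition Delta2 (f : H -> ereal) (xbar p : H) (t : R) (u : H) : ereal :=
  match f xbar, f (hadd xbar (hscal t u)) with
  | Fin fx, Fin fy => Fin ((fy - fx - t * hinner p u) / (/2 * t ^ 2))
  | _, _ => PInf
  end.

(* "beta <= f''_-(xbar, p, h)", where
   f''_-(xbar,p,h) = liminf_{h' -> h, t -> 0+} Delta2 f (xbar,p,t,h');
   unfolded definition of  beta <= liminf. *)
Definition sec_subderiv_ge (f : H -> ereal) (xbar p h : H) (beta : R) : Prop :=
  forall r, r < beta -> exists delta, 0 < delta /\
    forall t h', 0 < t < delta -> hnorm (hsub h' h) < delta ->
      ere_le (Fin r) (Delta2 f xbar p t h').

Definition T_M (f : H -> ereal) (xbar p : H) (h z : H) : Prop :=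
  exists (t : nat -> R) (hn zn : nat -> H),
    (forall n, 0 < t n) /\ Un_cv t 0 /\ norm_cv hn h /\ weak_cv zn z /\
    forall n, prox_subdiff f (hadd xbar (hscal (t n) (hn n)))
                              (hadd p (hscal (t n) (zn n))).

Definition D2M (f : H -> ereal) (xbar p h z : H) : Prop := T_M f xbar p h z.

Definition N_M (f : H -> ereal) (xbar p : H) (a b : H) : Prop :=
  forall h z, T_M f xbar p h z -> hinner a h + hinner b z <= 0.

Definition d2M (f : H -> ereal) (xbar p h z : H) : Prop :=
  N_M f xbar p z (hopp h).

Definition pnorm (a b : H) : R := sqrt ((hnorm a)^2 + (hnorm b)^2).

Definition cone_shift (A : H -> H -> Prop) (x1 x2 : H) (u1 u2 : H) : Prop :=
  exists lam y1 y2, 0 <= lam /\ A y1 y2 /\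
    u1 = hscal lam (hsub y1 x1) /\ u2 = hscal lam (hsub y2 x2).

Definition closure2 (C : H -> H -> Prop) (u1 u2 : H) : Prop :=
  forall eps, 0 < eps -> exists v1 v2, C v1 v2 /\ pnorm (hsub v1 u1) (hsub v2 u2) < eps.

Definition is_subspace2 (C : H -> H -> Prop) : Prop :=
  C hzero hzero /\
  (forall u1 u2 v1 v2, C u1 u2 -> C v1 v2 -> C (hadd u1 v1) (hadd u2 v2)) /\
  (forall lam u1 u2, C u1 u2 -> C (hscal lam u1) (hscal lam u2)).

Definition qri2 (A : H -> H -> Prop) (x1 x2 : H) : Prop :=
  A x1 x2 /\ is_subspace2 (closure2 (cone_shift A x1 x2)).

Definition mosco_cv (C : nat -> H -> R -> Prop) (L : H -> R -> Prop) : Prop :=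
  (forall x r, L x r <->
     exists (xn : nat -> H) (rn : nat -> R),
       (forall n, C n (xn n) (rn n)) /\ norm_cv xn x /\ Un_cv rn r) /\
  (forall x r, L x r <->
     exists (nk : nat -> nat) (xk : nat -> H) (rk : nat -> R),
       (forall k, (nk k < nk (S k))%nat) /\
       (forall k, C (nk k) (xk k) (rk k)) /\ weak_cv xk x /\ Un_cv rk r).

Definition epi (g : H -> ereal) (x : H) (r : R) : Prop := ere_le (g x) (Fin r).

Definition twice_epi_diff_mosco (f : H -> ereal) (xbar p : H) : Prop :=
  exists phi : H -> ereal, proper phi /\
    forall t : nat -> R, (forall n, 0 < t n) -> Un_cv t 0 ->
      mosco_cv (fun n => epi (Delta2 f xbar p (t n))) (epi phi).

Definition SOC_first (f : H -> ereal) (xbar : H) : Prop :=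
  exists beta, 0 < beta /\
    forall h, unit_sphere h -> sec_subderiv_ge f xbar hzero h beta.

Definition SOC_second (f : H -> ereal) (xbar : H) : Prop :=
  exists beta, 0 < beta /\
    forall h, (exists z, D2M f xbar hzero h z) -> unit_sphere h ->
      exists z, D2M f xbar hzero h z /\ beta <= hinner z h.

Definition SOC_third (f : H -> ereal) (xbar : H) : Prop :=
  exists beta, 0 < beta /\
    forall h z, unit_sphere h -> (exists z', d2M f xbar hzero h z') ->
      d2M f xbar hzero h z -> beta <= hinner z h.

End HS.

(* Main.v *)
Require Import Defs.
From Stdlib Require Import Reals Lra Lia Classical ClassicalEpsilon FunctionalExtensionality.
Open Scope R_scope.

Arguments hadd_assoc {h}. Arguments hadd_comm {h}. Arguments hadd_zero {h}. Arguments hadd_opp {h}.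
Arguments hscal_assoc {h}. Arguments hscal_one {h}. Arguments hscal_distr_r {h}. Arguments hscal_distr_l {h}.
Arguments hinner_sym {h}. Arguments hinner_add {h}. Arguments hinner_scal {h}. Arguments hinner_pos {h}.
Arguments hinner_def {h}. Arguments hcomplete {h}.
Lemma hadd_0r {H : HilbertSpace} (x : H) : hadd x hzero = x.
Proof. rewrite hadd_comm. apply hadd_zero. Qed.

Lemma hinner_add_r {H : HilbertSpace} (x y z : H) : hinner x (hadd y z) = hinner x y + hinner x z.
Proof. rewrite (hinner_sym x), (hinner_sym x y), (hinner_sym x z). apply hinner_add. Qed.

Lemma hinner_scal_r {H : HilbertSpace} a (x y : H) : hinner x (hscal a y) = a * hinner x y.
Proof. rewrite (hinner_sym x), (hinner_sym x y). apply hinner_scal. Qed.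

Lemma hinner_zero_l {H : HilbertSpace} (x : H) : hinner hzero x = 0.
Proof.
  assert (E := hinner_add hzero hzero x). rewrite hadd_zero in E. lra.
Qed.
Lemma hinner_zero_r {H : HilbertSpace} (x : H) : hinner x hzero = 0.
Proof. rewrite hinner_sym. apply hinner_zero_l. Qed.

Lemma hinner_opp_l {H : HilbertSpace} (x y : H) : hinner (hopp x) y = - hinner x y.
Proof.
  assert (E := hinner_add x (hopp x) y). rewrite hadd_opp, hinner_zero_l in E. lra.
Qed.
Lemma hinner_opp_r {H : HilbertSpace} (x y : H) : hinner x (hopp y) = - hinner x y.
Proof. rewrite hinner_sym, hinner_opp_l, hinner_sym. reflexivity. Qed.

Lemma vec_eq {H : HilbertSpace} (u v : H) :
  hinner (hadd u (hopp v)) (hadd u (hopp v)) = 0 -> u = v.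
Proof.
  intro E. apply hinner_def in E.
  assert (E2 : hadd (hadd u (hopp v)) v = hadd hzero v) by (rewrite E; reflexivity).
  rewrite <- hadd_assoc, (hadd_comm (hopp v)), hadd_opp, hadd_0r, hadd_zero in E2. exact E2.
Qed.

Global Hint Rewrite @hinner_add @hinner_add_r @hinner_scal @hinner_scal_r
  @hinner_zero_l @hinner_zero_r @hinner_opp_l @hinner_opp_r : ip.

Ltac ipnorm := repeat match goal with
  | |- context [hinner ?a ?b] => match goal with
      | |- context [hinner b a] => progress rewrite (hinner_sym b a)
      end
  end.

Ltac veq := apply vec_eq; unfold hsub; autorewrite with ip; ipnorm; first [ring | field].

Lemma test {H : HilbertSpace} (x y : H) a : hscal a (hadd x y) = hadd (hscal a y) (hscal a x).
Proof. veq. Qed.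
Lemma hnorm_ge0 {H : HilbertSpace} (x : H) : 0 <= hnorm x.
Proof. unfold hnorm. apply sqrt_pos. Qed.

Lemma hnorm_sq {H : HilbertSpace} (x : H) : hnorm x ^ 2 = hinner x x.
Proof. unfold hnorm. simpl. rewrite Rmult_1_r. apply sqrt_sqrt, hinner_pos. Qed.

Lemma hnorm_sq' {H : HilbertSpace} (x : H) : hnorm x * hnorm x = hinner x x.
Proof. unfold hnorm. apply sqrt_sqrt, hinner_pos. Qed.

Lemma sq_le_norm {H : HilbertSpace} (x : H) c : 0 <= c -> hinner x x <= c * c -> hnorm x <= c.
Proof.
  intros Hc Hx. unfold hnorm. rewrite <- (sqrt_square c Hc). apply sqrt_le_1_alt. lra.
Qed.

Lemma norm_lt_sq {H : HilbertSpace} (x : H) c : 0 <= c -> hinner x x < c * c -> hnorm x < c.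
Proof.
  intros Hc Hx. unfold hnorm. rewrite <- (sqrt_square c Hc). apply sqrt_lt_1_alt.
  split; [apply hinner_pos | lra].
Qed.

Lemma hnorm_le_sq {H : HilbertSpace} (x y : H) : hnorm x <= hnorm y -> hinner x x <= hinner y y.
Proof.
  intro E. rewrite <- !hnorm_sq'. pose proof (hnorm_ge0 x). nra.
Qed.

Lemma hnorm_lt_sq {H : HilbertSpace} (x y : H) : hnorm x < hnorm y -> hinner x x < hinner y y.
Proof.
  intro E. rewrite <- !hnorm_sq'. pose proof (hnorm_ge0 x). nra.
Qed.

Lemma hnorm_zero {H : HilbertSpace} : hnorm (@hzero H) = 0.
Proof. unfold hnorm. rewrite hinner_zero_l. apply sqrt_0. Qed.

Lemma hnorm_eq0 {H : HilbertSpace} (x : H) : hnorm x = 0 -> x = hzero.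
Proof.
  intro E. apply hinner_def. rewrite <- hnorm_sq', E. ring.
Qed.

Lemma cauchy_schwarz {H : HilbertSpace} (x y : H) : Rabs (hinner x y) <= hnorm x * hnorm y.
Proof.
  destruct (Req_dec (hinner y y) 0) as [Hy|Hy].
  - apply hinner_def in Hy. subst y. rewrite hinner_zero_r, hnorm_zero, Rabs_R0. lra.
  - pose proof (hinner_pos y) as Py.
    set (t := - hinner x y / hinner y y).
    assert (P := hinner_pos (hadd x (hscal t y))).
    autorewrite with ip in P. rewrite (hinner_sym y x) in P.
    assert (Q : hinner x x - hinner x y ^ 2 / hinner y y >= 0).
    { unfold t in P. field_simplify in P; [|lra].
      apply Rle_ge. unfold Rdiv in *. 
      replace (hinner x x - hinner x y ^ 2 * / hinner y y) with
        ((hinner x x * hinner y y - hinner x y ^ 2) / hinner y y) by (field; lra).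
      apply Rmult_le_pos. 2: { left. apply Rinv_0_lt_compat. lra. }
      assert (0 <= (hinner x x * hinner y y - hinner x y ^ 2) / hinner y y) by lra.
      replace (hinner x x * hinner y y - hinner x y ^ 2) with
        ((hinner x x * hinner y y - hinner x y ^ 2) / hinner y y * hinner y y) by (field; lra).
      apply Rmult_le_pos; lra. }
    assert (Q2 : hinner x y ^ 2 <= hinner x x * hinner y y).
    { assert (0 < hinner y y) by lra.
      assert (hinner x y ^ 2 / hinner y y <= hinner x x) by lra.
      apply (Rmult_le_compat_r (hinner y y)) in H1; [|lra].
      unfold Rdiv in H1. rewrite Rmult_assoc, Rinv_l in H1; lra. }
    rewrite <- (hnorm_sq' x), <- (hnorm_sq' y) in Q2.
    pose proof (hnorm_ge0 x). pose proof (hnorm_ge0 y).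
    apply Rsqr_incr_0_var. 2: nra. unfold Rsqr. rewrite <- Rabs_mult, Rabs_right. 2: nra.
    nra.
Qed.

Lemma hinner_le {H : HilbertSpace} (x y : H) : hinner x y <= hnorm x * hnorm y.
Proof. pose proof (cauchy_schwarz x y). pose proof (Rle_abs (hinner x y)). lra. Qed.

Lemma hinner_ge {H : HilbertSpace} (x y : H) : - (hnorm x * hnorm y) <= hinner x y.
Proof. pose proof (cauchy_schwarz x y). pose proof (Rabs_pos (hinner x y)). pose proof (Rle_abs (- hinner x y)). rewrite Rabs_Ropp in *. lra. Qed.

Lemma hnorm_triangle {H : HilbertSpace} (x y : H) : hnorm (hadd x y) <= hnorm x + hnorm y.
Proof.
  apply sq_le_norm. pose proof (hnorm_ge0 x); pose proof (hnorm_ge0 y); lra.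
  autorewrite with ip. rewrite (hinner_sym y x). pose proof (hinner_le x y).
  rewrite <- (hnorm_sq' x), <- (hnorm_sq' y). nra.
Qed.

Lemma hnorm_scal {H : HilbertSpace} a (x : H) : hnorm (hscal a x) = Rabs a * hnorm x.
Proof.
  unfold hnorm. autorewrite with ip. rewrite <- Rmult_assoc, <- (sqrt_square (Rabs a)) by apply Rabs_pos.
  rewrite <- sqrt_mult_alt. 2: { apply Rmult_le_pos; apply Rabs_pos. }
  f_equal. rewrite <- Rabs_mult. rewrite Rabs_right; [ring|]. apply Rle_ge, Rle_0_sqr.
Qed.

Lemma hnorm_opp {H : HilbertSpace} (x : H) : hnorm (hopp x) = hnorm x.
Proof. unfold hnorm. autorewrite with ip. f_equal; ring. Qed.

Lemma hnorm_sub_sym {H : HilbertSpace} (x y : H) : hnorm (hsub x y) = hnorm (hsub y x).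
Proof. unfold hnorm, hsub. autorewrite with ip. ipnorm. f_equal; ring. Qed.

Lemma hnorm_sub_tri {H : HilbertSpace} (x y z : H) : hnorm (hsub x z) <= hnorm (hsub x y) + hnorm (hsub y z).
Proof.
  replace (hsub x z) with (hadd (hsub x y) (hsub y z)) by veq. apply hnorm_triangle.
Qed.

Lemma hnorm_eq {H : HilbertSpace} (x y : H) : hinner x x = hinner y y -> hnorm x = hnorm y.
Proof. unfold hnorm. intros ->. reflexivity. Qed.
Lemma le_eps_lim a b c θ0 : 0 < θ0 -> (forall θ, 0 < θ < θ0 -> a <= b + θ * c) -> a <= b.
Proof.
  intros H0 Hall. destruct (Rle_dec a b) as [|Hn]; [assumption|]. exfalso.
  assert (Hc : 0 < c).
  { destruct (Rlt_dec 0 c) as [|Hc]; [assumption|]. specialize (Hall (θ0/2)). 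
    assert (a <= b + θ0 / 2 * c) by (apply Hall; lra). nra. }
  set (θ := Rmin (θ0/2) ((a - b) / (2 * c))).
  assert (Hθ1 : θ <= θ0/2) by apply Rmin_l.
  assert (Hθ2 : θ <= (a-b)/(2*c)) by apply Rmin_r.
  assert (Hθp : 0 < θ). { unfold θ. apply Rmin_pos; [lra|]. apply Rdiv_lt_0_compat; lra. }
  specialize (Hall θ ltac:(lra)).
  assert (θ * c <= (a - b) / 2).
  { apply (Rmult_le_compat_r c) in Hθ2; [|lra]. 
    replace ((a - b) / (2 * c) * c) with ((a-b)/2) in Hθ2 by (field; lra). lra. }
  lra.
Qed.

Definition fv {H : HilbertSpace} (f : H -> ereal) (x : H) : R :=
  match f x with Fin r => r | PInf => 0 end.

Definition pc_lam {H : HilbertSpace} (f : H -> ereal) (lambda : R) : Prop :=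
    forall x y t r s, 0 <= t <= 1 ->
      ere_le (Fin (r + (hnorm x)^2 / (2 * lambda))) (f x) ->
      ere_le (Fin (s + (hnorm y)^2 / (2 * lambda))) (f y) ->
      let z := hadd (hscal t x) (hscal (1 - t) y) in
      ere_le (Fin (t * r + (1 - t) * s + (hnorm z)^2 / (2 * lambda))) (f z).

Lemma mix_identity {H : HilbertSpace} (x y : H) t :
  t * hinner x x + (1 - t) * hinner y y - hinner (hadd (hscal t x) (hscal (1-t) y)) (hadd (hscal t x) (hscal (1-t) y))
  = t * (1 - t) * hinner (hsub x y) (hsub x y).
Proof. unfold hsub. autorewrite with ip. ipnorm. ring. Qed.

Lemma ere_le_mono (e : ereal) u v : ere_le (Fin u) e -> v <= u -> ere_le (Fin v) e.
Proof. destruct e; simpl; intros; lra || auto. Qed.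

Lemma pc_fin {H : HilbertSpace} (f : H -> ereal) lam x y t a b :
  0 < lam -> pc_lam f lam -> 0 <= t <= 1 -> f x = Fin a -> f y = Fin b ->
  ere_le (Fin (t * a + (1 - t) * b - t * (1 - t) * hnorm (hsub x y) ^ 2 / (2 * lam)))
         (f (hadd (hscal t x) (hscal (1-t) y))).
Proof.
  intros Hl Hpc Ht Ha Hb.
  assert (P1 : ere_le (Fin (a - hnorm x ^ 2 / (2 * lam) + hnorm x ^ 2 / (2 * lam))) (f x))
    by (rewrite Ha; simpl; lra).
  assert (P2 : ere_le (Fin (b - hnorm y ^ 2 / (2 * lam) + hnorm y ^ 2 / (2 * lam))) (f y))
    by (rewrite Hb; simpl; lra).
  specialize (Hpc x y t _ _ Ht P1 P2). cbv zeta in Hpc.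
  eapply ere_le_mono; [exact Hpc|].
  rewrite !hnorm_sq. pose proof (mix_identity x y t) as M.
  assert (E : forall u, u / (2 * lam) = u * / (2*lam)) by (intro; reflexivity).
  rewrite !E. assert (0 < / (2 * lam)) by (apply Rinv_0_lt_compat; lra).
  replace (hinner (hadd (hscal t x) (hscal (1 - t) y)) (hadd (hscal t x) (hscal (1 - t) y)))
   with (t * hinner x x + (1 - t) * hinner y y - t * (1 - t) * hinner (hsub x y) (hsub x y)) by lra.
  apply Req_le. ring.
Qed.

Lemma pc_inf {H : HilbertSpace} (f : H -> ereal) lam x y t a :
  0 < lam -> pc_lam f lam -> 0 <= t < 1 -> f x = Fin a -> f y = PInf ->
  f (hadd (hscal t x) (hscal (1-t) y)) = PInf.
Proof.
  intros Hl Hpc Ht Ha Hb.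
  destruct (f (hadd (hscal t x) (hscal (1-t) y))) as [c|] eqn:Ec; [|reflexivity]. exfalso.
  set (z := hadd (hscal t x) (hscal (1-t) y)) in *.
  set (r := a - hnorm x ^ 2 / (2 * lam)).
  set (s := (c - t * r - hnorm z ^ 2 / (2*lam) + 1) / (1 - t)).
  assert (P1 : ere_le (Fin (r + hnorm x ^ 2 / (2 * lam))) (f x)) by (rewrite Ha; simpl; unfold r; lra).
  assert (P2 : ere_le (Fin (s + hnorm y ^ 2 / (2 * lam))) (f y)) by (rewrite Hb; simpl; exact I).
  specialize (Hpc x y t r s ltac:(lra) P1 P2). cbv zeta in Hpc. fold z in Hpc. rewrite Ec in Hpc. simpl in Hpc.
  assert (Hq' : (1 - t) * s = c - t * r - hnorm z ^ 2 / (2 * lam) + 1) by (unfold s; field; lra).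
  lra.
Qed.
Lemma all_fin {H : HilbertSpace} (f : H -> ereal) lam xbar :
  0 < lam -> pc_lam f lam -> continuous_at f xbar -> forall y, f y = Fin (fv f y).
Proof.
  intros Hl Hpc [fx [Hfx Hc]] y. unfold fv.
  destruct (f y) as [r|] eqn:Ey; [reflexivity|]. exfalso.
  destruct (Hc 1 ltac:(lra)) as [d [Hd Hd2]].
  set (D := hnorm (hsub y xbar)). assert (HD : 0 <= D) by apply hnorm_ge0.
  set (s := Rmin (1/2) (d / (2 * (D + 1)))).
  assert (Hs1 : s <= 1/2) by apply Rmin_l. assert (Hs2 : s <= d / (2 * (D+1))) by apply Rmin_r.
  assert (Hs0 : 0 < s) by (apply Rmin_pos; [lra| apply Rdiv_lt_0_compat; lra]).
  pose proof (pc_inf f lam xbar y (1 - s) fx Hl Hpc ltac:(lra) Hfx Ey) as Hinf.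
  destruct (Hd2 (hadd (hscal (1 - s) xbar) (hscal (1 - (1 - s)) y))) as [fy [Hfy _]].
  - replace (hsub (hadd (hscal (1 - s) xbar) (hscal (1 - (1 - s)) y)) xbar) with (hscal s (hsub y xbar)) by veq.
    rewrite hnorm_scal, Rabs_right by lra. fold D.
    assert (s * D <= d / (2 * (D+1)) * D) by (apply Rmult_le_compat_r; lra).
    assert (d / (2 * (D+1)) * D < d).
    { unfold Rdiv. rewrite Rmult_assoc. 
      assert (/ (2 * (D + 1)) * D < 1).
      { apply (Rmult_lt_reg_l (2 * (D+1))); [lra|]. rewrite <- Rmult_assoc, Rinv_r; lra. }
      nra. }
    lra.
  - rewrite Hinf in Hfy. discriminate.
Qed.

Lemma sc_fv {H : HilbertSpace} (f : H -> ereal) lam xbar x y t :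
  0 < lam -> pc_lam f lam -> continuous_at f xbar -> 0 <= t <= 1 ->
  t * fv f x + (1 - t) * fv f y - t * (1 - t) * hnorm (hsub x y) ^ 2 / (2 * lam)
   <= fv f (hadd (hscal t x) (hscal (1-t) y)).
Proof.
  intros Hl Hpc Hc Ht.
  pose proof (all_fin f lam xbar Hl Hpc Hc) as AF.
  pose proof (pc_fin f lam x y t (fv f x) (fv f y) Hl Hpc Ht (AF x) (AF y)) as P.
  rewrite (AF (hadd (hscal t x) (hscal (1-t) y))) in P. exact P.
Qed.

Lemma prox_fv {H : HilbertSpace} (f : H -> ereal) lam xbar x z :
  0 < lam -> pc_lam f lam -> continuous_at f xbar -> prox_subdiff f x z ->
  exists sigma delta, 0 < sigma /\ 0 < delta /\ forall y, hnorm (hsub y x) < delta ->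
    fv f x + hinner z (hsub y x) - sigma / 2 * hnorm (hsub y x) ^ 2 <= fv f y.
Proof.
  intros Hl Hpc Hc [fx [Hfx [sg [dl [Hsg [Hdl Hp]]]]]].
  pose proof (all_fin f lam xbar Hl Hpc Hc) as AF.
  exists sg, dl. split; [|split]; auto. intros y Hy. specialize (Hp y Hy).
  rewrite (AF y) in Hp. simpl in Hp. unfold fv at 1. rewrite Hfx. exact Hp.
Qed.

Lemma star {H : HilbertSpace} (f : H -> ereal) lam xbar x z :
  0 < lam -> pc_lam f lam -> continuous_at f xbar -> prox_subdiff f x z ->
  forall y, fv f y <= fv f x + hinner z (hsub y x) + hnorm (hsub y x) ^ 2 / (2 * lam).
Proof.
  intros Hl Hpc Hc Hp y.
  destruct (prox_fv f lam xbar x z Hl Hpc Hc Hp) as [sg [dl [Hsg [Hdl Hb]]]].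
  set (d := hsub y x). set (N := hnorm d). assert (HN : 0 <= N) by apply hnorm_ge0.
  set (K := (sg / 2 + / lam) * N ^ 2).
  apply (le_eps_lim _ _ K (Rmin (1/2) (dl / (N + 1)))).
  { apply Rmin_pos; [lra|apply Rdiv_lt_0_compat; lra]. }
  intros th [Hth0 Hth1].
  assert (Ht1 : th < 1/2) by (eapply Rlt_le_trans; [exact Hth1|apply Rmin_l]).
  assert (Ht2 : th < dl / (N+1)) by (eapply Rlt_le_trans; [exact Hth1|apply Rmin_r]).
  assert (HthN : th * N < dl).
  { assert (th * N <= th * (N+1)) by nra.
    assert (th * (N + 1) < dl).
    { apply (Rmult_lt_compat_r (N+1)) in Ht2; [|lra]. unfold Rdiv in Ht2.
      rewrite Rmult_assoc, Rinv_l in Ht2; lra. }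
    lra. }
  set (w := hadd x (hscal th d)). set (w' := hadd x (hscal (-th) d)).
  assert (B1 : fv f x + hinner z (hsub w' x) - sg / 2 * hnorm (hsub w' x) ^ 2 <= fv f w').
  { apply Hb. replace (hsub w' x) with (hscal (-th) d) by (unfold w'; veq).
    rewrite hnorm_scal, Rabs_left1 by lra. fold N. lra. }
  replace (hsub w' x) with (hscal (-th) d) in B1 by (unfold w'; veq).
  rewrite hnorm_scal, Rabs_left1 in B1 by lra. fold N in B1.
  rewrite hinner_scal_r in B1.
  pose proof (sc_fv f lam xbar w w' (1/2) Hl Hpc Hc ltac:(lra)) as M.
  replace (hadd (hscal (1/2) w) (hscal (1 - 1/2) w')) with x in M by (unfold w, w'; veq).
  replace (hsub w w') with (hscal (2 * th) d) in M by (unfold w, w'; veq).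
  rewrite hnorm_scal, Rabs_right in M by lra. fold N in M.
  pose proof (sc_fv f lam xbar y x th Hl Hpc Hc ltac:(lra)) as C.
  replace (hadd (hscal th y) (hscal (1 - th) x)) with w in C by (unfold w, d; veq).
  fold d N in C.
  unfold K.
  assert (Hli : 0 < / lam) by (apply Rinv_0_lt_compat; lra).
  assert (E1 : forall u, u / (2 * lam) = u * / 2 * / lam) by (intro; field; lra).
  rewrite !E1 in *.
  assert (th * fv f y <= th * (fv f x + hinner z d + N ^ 2 * / 2 * / lam + th * ((sg / 2 + / lam) * N ^ 2))).
  { assert (0 <= th * th * (N * N) * / lam) by (apply Rmult_le_pos; [nra|lra]).
    lra. }
  apply (Rmult_le_reg_l th); lra.
Qed.
Definition Setting {H : HilbertSpace} (f : H -> ereal) (lam : R) (xbar : H) : Prop :=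
  0 < lam /\ pc_lam f lam /\ continuous_at f xbar /\ prox_subdiff f xbar hzero.

Definition F {H : HilbertSpace} (f : H -> ereal) (xbar : H) (t : R) (u : H) : R :=
  (fv f (hadd xbar (hscal t u)) - fv f xbar) / (/ 2 * t ^ 2).

Lemma D2_eq {H : HilbertSpace} (f : H -> ereal) lam xbar t u :
  Setting f lam xbar -> Delta2 f xbar hzero t u = Fin (F f xbar t u).
Proof.
  intros [Hl [Hpc [Hc _]]]. pose proof (all_fin f lam xbar Hl Hpc Hc) as AF.
  unfold Delta2, F. rewrite (AF xbar), (AF (hadd xbar (hscal t u))), hinner_zero_l.
  f_equal. f_equal. ring.
Qed.

Lemma F_scale {H : HilbertSpace} (f : H -> ereal) xbar t s u :
  0 < t -> 0 < s -> F f xbar t (hscal s u) = s ^ 2 * F f xbar (t * s) u.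
Proof.
  intros Ht Hs. unfold F. rewrite hscal_assoc. field. split; lra.
Qed.

Lemma F_upper {H : HilbertSpace} (f : H -> ereal) lam xbar t u :
  Setting f lam xbar -> 0 < t -> F f xbar t u <= hnorm u ^ 2 / lam.
Proof.
  intros [Hl [Hpc [Hc Hp]]] Ht.
  pose proof (star f lam xbar xbar hzero Hl Hpc Hc Hp (hadd xbar (hscal t u))) as S.
  replace (hsub (hadd xbar (hscal t u)) xbar) with (hscal t u) in S by veq.
  rewrite hinner_zero_l, hnorm_scal, Rabs_right in S by lra.
  unfold F. apply (Rmult_le_reg_r (/ 2 * t ^ 2)). { apply Rmult_lt_0_compat; [lra| apply pow_lt; lra]. }
  replace ((fv f (hadd xbar (hscal t u)) - fv f xbar) / (/ 2 * t ^ 2) * (/ 2 * t ^ 2))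
    with (fv f (hadd xbar (hscal t u)) - fv f xbar) by (field; lra).
  replace (hnorm u ^ 2 / lam * (/ 2 * t ^ 2)) with ((t * hnorm u) ^ 2 / (2 * lam)) by (field; lra).
  lra.
Qed.

Lemma F_lower {H : HilbertSpace} (f : H -> ereal) lam xbar :
  Setting f lam xbar -> exists sg dl, 0 < sg /\ 0 < dl /\
    forall t u, 0 < t -> t * hnorm u < dl -> - sg * hnorm u ^ 2 <= F f xbar t u.
Proof.
  intros [Hl [Hpc [Hc Hp]]].
  destruct (prox_fv f lam xbar xbar hzero Hl Hpc Hc Hp) as [sg [dl [Hsg [Hdl B]]]].
  exists sg, dl. split; [|split]; auto. intros t u Ht Hu.
  specialize (B (hadd xbar (hscal t u))).
  replace (hsub (hadd xbar (hscal t u)) xbar) with (hscal t u) in B by veq.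
  rewrite hinner_zero_l, hnorm_scal, Rabs_right in B by lra. specialize (B Hu).
  unfold F. apply (Rmult_le_reg_r (/ 2 * t ^ 2)). { apply Rmult_lt_0_compat; [lra| apply pow_lt; lra]. }
  replace ((fv f (hadd xbar (hscal t u)) - fv f xbar) / (/ 2 * t ^ 2) * (/ 2 * t ^ 2))
    with (fv f (hadd xbar (hscal t u)) - fv f xbar) by (field; lra).
  replace (- sg * hnorm u ^ 2 * (/ 2 * t ^ 2)) with (- (sg / 2 * (t * hnorm u) ^ 2)) by (field; lra).
  lra.
Qed.

Lemma F_sc {H : HilbertSpace} (f : H -> ereal) lam xbar t u v θ :
  Setting f lam xbar -> 0 < t -> 0 <= θ <= 1 ->
  θ * F f xbar t u + (1 - θ) * F f xbar t v - θ * (1 - θ) * hnorm (hsub u v) ^ 2 / lam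
    <= F f xbar t (hadd (hscal θ u) (hscal (1 - θ) v)).
Proof.
  intros [Hl [Hpc [Hc Hp]]] Ht Hθ.
  pose proof (sc_fv f lam xbar (hadd xbar (hscal t u)) (hadd xbar (hscal t v)) θ Hl Hpc Hc Hθ) as S.
  replace (hadd (hscal θ (hadd xbar (hscal t u))) (hscal (1 - θ) (hadd xbar (hscal t v))))
    with (hadd xbar (hscal t (hadd (hscal θ u) (hscal (1 - θ) v)))) in S by veq.
  replace (hsub (hadd xbar (hscal t u)) (hadd xbar (hscal t v))) with (hscal t (hsub u v)) in S by veq.
  rewrite hnorm_scal, Rabs_right in S by lra.
  unfold F. set (A := fv f (hadd xbar (hscal t u))) in *. set (B := fv f (hadd xbar (hscal t v))) in *.
  set (C := fv f (hadd xbar (hscal t (hadd (hscal θ u) (hscal (1 - θ) v))))) in *.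
  set (X := fv f xbar). set (N := hnorm (hsub u v)) in *.
  assert (Hp2 : 0 < / 2 * t ^ 2) by (apply Rmult_lt_0_compat; [lra| apply pow_lt; lra]).
  apply (Rmult_le_reg_r (/ 2 * t ^ 2)); [exact Hp2|].
  replace ((C - X) / (/ 2 * t ^ 2) * (/ 2 * t ^ 2)) with (C - X) by (field; lra).
  replace ((θ * ((A - X) / (/ 2 * t ^ 2)) + (1 - θ) * ((B - X) / (/ 2 * t ^ 2)) -
     θ * (1 - θ) * N ^ 2 / lam) * (/ 2 * t ^ 2)) with
     (θ * A + (1 - θ) * B - θ * (1 - θ) * (t * N) ^ 2 / (2 * lam) - X) by (field; lra).
  lra.
Qed.

Lemma F_star {H : HilbertSpace} (f : H -> ereal) lam xbar t h z :
  Setting f lam xbar -> 0 < t ->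
  prox_subdiff f (hadd xbar (hscal t h)) (hadd hzero (hscal t z)) ->
  forall w, F f xbar t w <= F f xbar t h + 2 * hinner z (hsub w h) + hnorm (hsub w h) ^ 2 / lam.
Proof.
  intros [Hl [Hpc [Hc Hp0]]] Ht Hp w.
  pose proof (star f lam xbar _ _ Hl Hpc Hc Hp (hadd xbar (hscal t w))) as S.
  replace (hsub (hadd xbar (hscal t w)) (hadd xbar (hscal t h))) with (hscal t (hsub w h)) in S by veq.
  rewrite hnorm_scal, Rabs_right, hadd_zero, hinner_scal, hinner_scal_r in S by lra.
  unfold F. set (A := fv f (hadd xbar (hscal t w))) in *. set (B := fv f (hadd xbar (hscal t h))) in *.
  set (X := fv f xbar). set (N := hnorm (hsub w h)) in *.
  assert (Hp2 : 0 < / 2 * t ^ 2) by (apply Rmult_lt_0_compat; [lra| apply pow_lt; lra]).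
  apply (Rmult_le_reg_r (/ 2 * t ^ 2)); [exact Hp2|].
  replace ((A - X) / (/ 2 * t ^ 2) * (/ 2 * t ^ 2)) with (A - X) by (field; lra).
  replace (((B - X) / (/ 2 * t ^ 2) + 2 * hinner z (hsub w h) + N ^ 2 / lam) * (/ 2 * t ^ 2))
    with (B + t * (t * hinner z (hsub w h)) + (t * N) ^ 2 / (2 * lam) - X) by (field; lra).
  lra.
Qed.
Lemma fchoice {A B : Type} (P : A -> B -> Prop) : (forall a, exists b, P a b) -> exists g, forall a, P a (g a).
Proof.
  intro Hall. exists (fun a => proj1_sig (constructive_indefinite_description _ (Hall a))).
  intro a. exact (proj2_sig (constructive_indefinite_description _ (Hall a))).
Qed.

Definition t0 (n : nat) : R := / INR (S n).

Lemma t0_pos n : 0 < t0 n.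
Proof. unfold t0. apply Rinv_0_lt_compat, lt_0_INR. lia. Qed.

Lemma t0_cv : Un_cv t0 0.
Proof.
  intros eps He. destruct (archimed_cor1 eps He) as [N [HN HN0]]. exists N. intros n Hn.
  unfold Rdist, t0. rewrite Rminus_0_r, Rabs_right.
  2: { apply Rle_ge. left. apply Rinv_0_lt_compat, lt_0_INR. lia. }
  eapply Rle_lt_trans; [|exact HN]. apply Rinv_le_contravar. apply lt_0_INR; lia.
  apply le_INR. lia.
Qed.

Lemma cv_sub (u : nat -> R) l g : Un_cv u l -> (forall N, (N <= g N)%nat) -> Un_cv (fun n => u (g n)) l.
Proof.
  intros Hu Hg eps He. destruct (Hu eps He) as [N HN]. exists N. intros n Hn. apply HN.
  specialize (Hg n). lia.
Qed.

Lemma norm_cv_sub {H : HilbertSpace} (u : nat -> H) l g : norm_cv u l -> (forall N, (N <= g N)%nat) -> norm_cv (fun n => u (g n)) l.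
Proof. intros Hu Hg. unfold norm_cv. apply (cv_sub (fun n => hnorm (hsub (u n) l))); auto. Qed.

Lemma weak_cv_sub {H : HilbertSpace} (u : nat -> H) l g : weak_cv u l -> (forall N, (N <= g N)%nat) -> weak_cv (fun n => u (g n)) l.
Proof. intros Hu Hg v. apply (cv_sub (fun n => hinner (u n) v)); auto. Qed.

Lemma norm_cv_const {H : HilbertSpace} (h : H) : norm_cv (fun _ => h) h.
Proof.
  intros eps He. exists O. intros n _. unfold Rdist.
  replace (hsub h h) with (@hzero H) by veq. rewrite hnorm_zero. rewrite Rminus_0_r, Rabs_R0. lra.
Qed.

Lemma norm_cv_small {H : HilbertSpace} (u : nat -> H) l : norm_cv u l ->
  forall eps, 0 < eps -> exists N, forall n, (n >= N)%nat -> hnorm (hsub (u n) l) < eps.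
Proof.
  intros Hu eps He. destruct (Hu eps He) as [N HN]. exists N. intros n Hn. specialize (HN n Hn).
  unfold Rdist in HN. rewrite Rminus_0_r, Rabs_right in HN; auto. apply Rle_ge, hnorm_ge0.
Qed.

Lemma norm_cv_intro {H : HilbertSpace} (u : nat -> H) l :
  (forall eps, 0 < eps -> exists N, forall n, (n >= N)%nat -> hnorm (hsub (u n) l) < eps) -> norm_cv u l.
Proof.
  intros Hu eps He. destruct (Hu eps He) as [N HN]. exists N. intros n Hn. specialize (HN n Hn).
  unfold Rdist. rewrite Rminus_0_r, Rabs_right; auto. apply Rle_ge, hnorm_ge0.
Qed.

Lemma Un_cv_small (u : nat -> R) l : Un_cv u l ->
  forall eps, 0 < eps -> exists N, forall n, (n >= N)%nat -> l - eps < u n < l + eps.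
Proof.
  intros Hu eps He. destruct (Hu eps He) as [N HN]. exists N. intros n Hn. specialize (HN n Hn).
  unfold Rdist in HN. apply Rabs_def2 in HN. lra.
Qed.

Lemma Un_cv_intro (u : nat -> R) l :
  (forall eps, 0 < eps -> exists N, forall n, (n >= N)%nat -> l - eps < u n < l + eps) -> Un_cv u l.
Proof.
  intros Hu eps He. destruct (Hu eps He) as [N HN]. exists N. intros n Hn. specialize (HN n Hn).
  unfold Rdist. apply Rabs_def1; lra.
Qed.

Lemma Un_cv_const c : Un_cv (fun _ => c) c.
Proof. apply Un_cv_intro. intros eps He. exists O. intros; lra. Qed.

Lemma Un_cv_scal (u : nat -> R) l c : Un_cv u l -> Un_cv (fun n => c * u n) (c * l).
Proof. intro Hu. apply CV_mult; auto. apply Un_cv_const. Qed.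

Lemma ev_and (P Q : nat -> Prop) : (exists N, forall n, (n >= N)%nat -> P n) -> (exists N, forall n, (n >= N)%nat -> Q n) ->
  exists N, forall n, (n >= N)%nat -> P n /\ Q n.
Proof.
  intros [N1 H1] [N2 H2]. exists (N1 + N2)%nat. intros n Hn. split; [apply H1|apply H2]; lia.
Qed.

Lemma norm_cv_lin {H : HilbertSpace} (u v : nat -> H) a b lu lv :
  norm_cv u lu -> norm_cv v lv -> norm_cv (fun n => hadd (hscal a (u n)) (hscal b (v n))) (hadd (hscal a lu) (hscal b lv)).
Proof.
  intros Hu Hv. apply norm_cv_intro. intros eps He.
  set (e := eps / (Rabs a + Rabs b + 1)).
  assert (He' : 0 < e) by (unfold e; apply Rdiv_lt_0_compat; [lra| pose proof (Rabs_pos a); pose proof (Rabs_pos b); lra]).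
  destruct (ev_and _ _ (norm_cv_small _ _ Hu e He') (norm_cv_small _ _ Hv e He')) as [N HN].
  exists N. intros n Hn. destruct (HN n Hn) as [A B].
  replace (hsub (hadd (hscal a (u n)) (hscal b (v n))) (hadd (hscal a lu) (hscal b lv)))
    with (hadd (hscal a (hsub (u n) lu)) (hscal b (hsub (v n) lv))) by veq.
  eapply Rle_lt_trans; [apply hnorm_triangle|]. rewrite !hnorm_scal.
  pose proof (Rabs_pos a); pose proof (Rabs_pos b).
  assert (Rabs a * hnorm (hsub (u n) lu) <= Rabs a * e) by (apply Rmult_le_compat_l; lra).
  assert (Rabs b * hnorm (hsub (v n) lv) <= Rabs b * e) by (apply Rmult_le_compat_l; lra).
  assert ((Rabs a + Rabs b) * e < eps).
  { unfold e. apply (Rmult_lt_reg_r (Rabs a + Rabs b + 1)); [lra|].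
    replace ((Rabs a + Rabs b) * (eps / (Rabs a + Rabs b + 1)) * (Rabs a + Rabs b + 1)) with ((Rabs a + Rabs b) * eps) by (field; lra).
    nra. }
  nra.
Qed.
Definition MoscoHyp {H : HilbertSpace} (f : H -> ereal) (xbar : H) (phi : H -> ereal) : Prop :=
  forall t : nat -> R, (forall n, 0 < t n) -> Un_cv t 0 ->
      mosco_cv (fun n => epi (Delta2 f xbar hzero (t n))) (epi phi).

Lemma epi_D2 {H : HilbertSpace} (f : H -> ereal) lam xbar t x r :
  Setting f lam xbar -> epi (Delta2 f xbar hzero t) x r <-> F f xbar t x <= r.
Proof. intro S. unfold epi. rewrite (D2_eq f lam xbar t x S). simpl. tauto. Qed.

Lemma mosco_lim {H : HilbertSpace} (f : H -> ereal) lam xbar phi t xn rn x r :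
  Setting f lam xbar -> MoscoHyp f xbar phi -> (forall n, 0 < t n) -> Un_cv t 0 ->
  norm_cv xn x -> Un_cv rn r -> (forall n, F f xbar (t n) (xn n) <= rn n) -> ere_le (phi x) (Fin r).
Proof.
  intros S HM Ht Ht0 Hx Hr Hle. destruct (HM t Ht Ht0) as [C1 _].
  apply (proj2 (C1 x r)). exists xn, rn. split; [|split]; auto.
  intro n. apply (proj2 (epi_D2 f lam xbar _ _ _ S)). apply Hle.
Qed.

Lemma mosco_rec {H : HilbertSpace} (f : H -> ereal) lam xbar phi t x r :
  Setting f lam xbar -> MoscoHyp f xbar phi -> (forall n, 0 < t n) -> Un_cv t 0 ->
  ere_le (phi x) (Fin r) -> exists xn rn, norm_cv xn x /\ Un_cv rn r /\ forall n, F f xbar (t n) (xn n) <= rn n.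
Proof.
  intros S HM Ht Ht0 Hle. destruct (HM t Ht Ht0) as [C1 _].
  destruct (proj1 (C1 x r) Hle) as [xn [rn [A [B C]]]]. exists xn, rn. split; [|split]; auto.
  intro n. apply (proj1 (epi_D2 f lam xbar _ _ _ S)). apply A.
Qed.

Lemma phi_fin {H : HilbertSpace} (f : H -> ereal) lam xbar phi :
  Setting f lam xbar -> MoscoHyp f xbar phi -> forall h, phi h = Fin (fv phi h).
Proof.
  intros S HM h. pose proof (mosco_lim f lam xbar phi t0 (fun _ => h) (fun _ => hnorm h ^ 2 / lam) h (hnorm h ^ 2 / lam)
     S HM t0_pos t0_cv (norm_cv_const h) (Un_cv_const _)) as P.
  assert (P' := P (fun n => F_upper f lam xbar (t0 n) h S (t0_pos n))).
  unfold fv. destruct (phi h); [reflexivity| simpl in P'; contradiction].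
Qed.

Lemma not_ev (P : nat -> Prop) : ~ (exists N, forall n, (n >= N)%nat -> P n) ->
  exists g : nat -> nat, forall N, (N <= g N)%nat /\ ~ P (g N).
Proof.
  intro Hn. apply (fchoice (fun N n => (N <= n)%nat /\ ~ P n)). intro N. apply NNPP. intro Hc. apply Hn. exists N. intros n Hge.
  apply NNPP. intro HP. apply Hc. exists n. split; [lia|auto].
Qed.

Lemma F_liminf {H : HilbertSpace} (f : H -> ereal) lam xbar phi t hn h :
  Setting f lam xbar -> MoscoHyp f xbar phi -> (forall n, 0 < t n) -> Un_cv t 0 -> norm_cv hn h ->
  forall eps, 0 < eps -> exists N, forall n, (n >= N)%nat -> fv phi h - eps <= F f xbar (t n) (hn n).
Proof.
  intros S HM Ht Ht0 Hh eps He. apply NNPP. intro Hn. apply not_ev in Hn. destruct Hn as [g Hg].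
  pose proof (mosco_lim f lam xbar phi (fun n => t (g n)) (fun n => hn (g n)) (fun _ => fv phi h - eps) h (fv phi h - eps)
    S HM (fun n => Ht (g n)) (cv_sub t 0 g Ht0 (fun N => proj1 (Hg N))) (norm_cv_sub hn h g Hh (fun N => proj1 (Hg N)))
    (Un_cv_const _)) as P.
  assert (P' : ere_le (phi h) (Fin (fv phi h - eps))).
  { apply P. intro n. destruct (Hg n) as [_ Hn]. lra. }
  rewrite (phi_fin f lam xbar phi S HM h) in P'. simpl in P'. lra.
Qed.

Lemma F_limsup {H : HilbertSpace} (f : H -> ereal) lam xbar phi t hn h :
  Setting f lam xbar -> MoscoHyp f xbar phi -> (forall n, 0 < t n) -> Un_cv t 0 -> norm_cv hn h ->
  forall eps, 0 < eps -> exists N, forall n, (n >= N)%nat -> F f xbar (t n) (hn n) <= fv phi h + eps.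
Proof.
  intros S HM Ht Ht0 Hh eps He.
  set (p := fv phi h).
  assert (Hp : ere_le (phi h) (Fin p)) by (rewrite (phi_fin f lam xbar phi S HM h); simpl; unfold p; lra).
  destruct (mosco_rec f lam xbar phi t h p S HM Ht Ht0 Hp) as [wn [rn [Hw [Hr Hle]]]].
  set (vn := fun n => hadd (hscal 2 (wn n)) (hscal (-1) (hn n))).
  assert (Hv : norm_cv vn h).
  { unfold vn. replace h with (hadd (hscal 2 h) (hscal (-1) h)) by veq. apply norm_cv_lin; auto. }
  assert (Hd : norm_cv (fun n => hsub (hn n) (wn n)) hzero).
  { replace (@hzero H) with (hadd (hscal 1 h) (hscal (-1) h)) by veq.
    replace (fun n => hsub (hn n) (wn n)) with (fun n => hadd (hscal 1 (hn n)) (hscal (-1) (wn n))).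
    2: { apply functional_extensionality. intro n. veq. }
    apply norm_cv_lin; auto. }
  destruct S as [Hl SS]. 
  set (e1 := Rmin 1 (sqrt (lam * eps / 16))).
  assert (He1 : 0 < e1) by (apply Rmin_pos; [lra| apply sqrt_lt_R0; assert (0 < lam * eps) by nra; lra]).
  assert (He1b : e1 * e1 <= lam * eps / 16).
  { assert (e1 <= sqrt (lam * eps / 16)) by apply Rmin_r. assert (0 <= e1) by lra.
    rewrite <- (sqrt_sqrt (lam * eps / 16)) by (assert (0 < lam * eps) by nra; lra). nra. }
  destruct (ev_and _ _ (F_liminf f lam xbar phi t vn h (conj Hl SS) HM Ht Ht0 Hv (eps / 4) ltac:(lra))
             (ev_and _ _ (Un_cv_small rn p Hr (eps / 8) ltac:(lra)) (norm_cv_small _ _ Hd e1 He1))) as [N HN].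
  exists N. intros n Hn. destruct (HN n Hn) as [A [B C]].
  pose proof (F_sc f lam xbar (t n) (hn n) (vn n) (1/2) (conj Hl SS) (Ht n) ltac:(lra)) as M.
  replace (hadd (hscal (1 / 2) (hn n)) (hscal (1 - 1 / 2) (vn n))) with (wn n) in M by (unfold vn; veq).
  replace (hsub (hn n) (vn n)) with (hscal 2 (hsub (hn n) (wn n))) in M by (unfold vn; veq).
  rewrite hnorm_scal, Rabs_right in M by lra.
  replace (hsub (hsub (hn n) (wn n)) hzero) with (hsub (hn n) (wn n)) in C by veq.
  specialize (Hle n). fold p in A.
  assert (Hq : (2 * hnorm (hsub (hn n) (wn n))) ^ 2 / lam <= eps / 4).
  { pose proof (hnorm_ge0 (hsub (hn n) (wn n))).
    apply (Rmult_le_reg_r lam); [lra|]. replace ((2 * hnorm (hsub (hn n) (wn n))) ^ 2 / lam * lam) with (4 * (hnorm (hsub (hn n) (wn n)) * hnorm (hsub (hn n) (wn n)))) by (field; lra).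
    nra. }
  fold p. lra.
Qed.

Lemma F_cv {H : HilbertSpace} (f : H -> ereal) lam xbar phi t hn h :
  Setting f lam xbar -> MoscoHyp f xbar phi -> (forall n, 0 < t n) -> Un_cv t 0 -> norm_cv hn h ->
  Un_cv (fun n => F f xbar (t n) (hn n)) (fv phi h).
Proof.
  intros S HM Ht Ht0 Hh. apply Un_cv_intro. intros eps He.
  destruct (ev_and _ _ (F_liminf f lam xbar phi t hn h S HM Ht Ht0 Hh (eps/2) ltac:(lra))
                      (F_limsup f lam xbar phi t hn h S HM Ht Ht0 Hh (eps/2) ltac:(lra))) as [N HN].
  exists N. intros n Hn. destruct (HN n Hn). lra.
Qed.
Lemma norm_cv_ext {H : HilbertSpace} (u v : nat -> H) l l' : (forall n, u n = v n) -> l = l' -> norm_cv u l -> norm_cv v l'.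
Proof.
  intros E El Hu. subst l'. replace v with u; auto. apply functional_extensionality; auto.
Qed.

Lemma ev_le_lim (u : nat -> R) l r : Un_cv u l -> (exists N, forall n, (n >= N)%nat -> r <= u n) -> r <= l.
Proof.
  intros Hu [N HN]. destruct (Rle_dec r l) as [|Hn]; auto. exfalso.
  destruct (ev_and _ _ (Un_cv_small u l Hu (r - l) ltac:(lra)) (ex_intro _ N HN)) as [M HM].
  destruct (HM M ltac:(lia)). lra.
Qed.

Lemma lt_all_le a b : (forall r, r < a -> r <= b) -> a <= b.
Proof.
  intro Hall. destruct (Rle_dec a b) as [|Hn]; auto. specialize (Hall ((a + b)/2) ltac:(lra)). lra.
Qed.

Lemma SG1 {H : HilbertSpace} (f : H -> ereal) lam xbar phi h beta :
  Setting f lam xbar -> MoscoHyp f xbar phi -> sec_subderiv_ge f xbar hzero h beta -> beta <= fv phi h.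
Proof.
  intros S HM Hs. apply lt_all_le. intros r Hr.
  destruct (Hs r Hr) as [d [Hd Hd2]].
  assert (Hp : ere_le (phi h) (Fin (fv phi h))) by (rewrite (phi_fin f lam xbar phi S HM h); simpl; lra).
  destruct (mosco_rec f lam xbar phi t0 h _ S HM t0_pos t0_cv Hp) as [wn [rn [Hw [Hr' Hle]]]].
  apply (ev_le_lim rn); auto.
  destruct (ev_and _ _ (Un_cv_small t0 0 t0_cv d Hd) (norm_cv_small _ _ Hw d Hd)) as [N HN].
  exists N. intros n Hn. destruct (HN n Hn) as [A B].
  specialize (Hd2 (t0 n) (wn n) ltac:(pose proof (t0_pos n); lra) B).
  rewrite (D2_eq f lam xbar _ _ S) in Hd2. simpl in Hd2. specialize (Hle n). lra.
Qed.

Lemma SG2 {H : HilbertSpace} (f : H -> ereal) lam xbar phi h beta :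
  Setting f lam xbar -> MoscoHyp f xbar phi -> beta <= fv phi h -> sec_subderiv_ge f xbar hzero h beta.
Proof.
  intros S HM Hb r Hr. apply NNPP. intro Hn.
  assert (Hall : forall n : nat, exists p : R * H, 0 < fst p < t0 n /\ hnorm (hsub (snd p) h) < t0 n /\
                   F f xbar (fst p) (snd p) < r).
  { intro n. apply NNPP. intro Hc. apply Hn. exists (t0 n). split; [apply t0_pos|].
    intros t h' Ht Hh'. rewrite (D2_eq f lam xbar _ _ S). simpl.
    apply Rnot_lt_le. intro Hlt. apply Hc. exists (t, h'). simpl. auto. }
  apply fchoice in Hall. destruct Hall as [g Hg].
  set (tn := fun n => fst (g n)). set (hn := fun n => snd (g n)).
  assert (Htn : forall n, 0 < tn n) by (intro n; apply (Hg n)).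
  assert (Htc : Un_cv tn 0).
  { apply Un_cv_intro. intros eps He. destruct (Un_cv_small t0 0 t0_cv eps He) as [N HN]. exists N.
    intros n Hn'. specialize (HN n Hn'). destruct (Hg n) as [A _]. unfold tn. lra. }
  assert (Hhc : norm_cv hn h).
  { apply norm_cv_intro. intros eps He. destruct (Un_cv_small t0 0 t0_cv eps He) as [N HN]. exists N.
    intros n Hn'. specialize (HN n Hn'). destruct (Hg n) as [_ [A _]]. unfold hn. lra. }
  destruct (F_liminf f lam xbar phi tn hn h S HM Htn Htc Hhc (beta - r) ltac:(lra)) as [N HN].
  specialize (HN N (le_n N)). destruct (Hg N) as [_ [_ C]]. unfold tn, hn in HN. lra.
Qed.

Lemma hnorm_cv {H : HilbertSpace} (hn : nat -> H) h : norm_cv hn h -> Un_cv (fun n => hnorm (hn n)) (hnorm h).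
Proof.
  intro Hh. apply Un_cv_intro. intros eps He. destruct (norm_cv_small _ _ Hh eps He) as [N HN].
  exists N. intros n Hn. specialize (HN n Hn).
  pose proof (hnorm_sub_tri (hn n) h hzero). pose proof (hnorm_sub_tri h (hn n) hzero).
  replace (hsub (hn n) hzero) with (hn n) in * by veq. replace (hsub h hzero) with h in * by veq.
  rewrite hnorm_sub_sym in H1. lra.
Qed.

Lemma squeeze0 (u c d : nat -> R) : (forall n, d n <= u n <= c n) -> Un_cv c 0 -> Un_cv d 0 -> Un_cv u 0.
Proof.
  intros Hb Hc Hd. apply Un_cv_intro. intros eps He.
  destruct (ev_and _ _ (Un_cv_small c 0 Hc eps He) (Un_cv_small d 0 Hd eps He)) as [N HN].
  exists N. intros n Hn. destruct (HN n Hn). specialize (Hb n). lra.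
Qed.

Lemma TM_eq {H : HilbertSpace} (f : H -> ereal) lam xbar phi h z :
  Setting f lam xbar -> MoscoHyp f xbar phi -> T_M f xbar hzero h z -> hinner z h = fv phi h.
Proof.
  intros S HM [t [hn [zn [Ht [Ht0 [Hh [Hz Hp]]]]]]].
  set (p := fv phi h).
  pose proof (fun n w => F_star f lam xbar (t n) (hn n) (zn n) S (Ht n) (Hp n) w) as FS.
  assert (Hlam : 0 < lam) by apply S.
  assert (Cb : Un_cv (fun n => F f xbar (t n) (hn n)) p) by (apply (F_cv f lam xbar phi); auto).
  assert (Hd : norm_cv (fun n => hsub (hn n) h) hzero).
  { apply norm_cv_intro. intros eps He. destruct (norm_cv_small _ _ Hh eps He) as [N HN]. exists N.
    intros n Hn. replace (hsub (hsub (hn n) h) hzero) with (hsub (hn n) h) by veq. auto. }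
  assert (Hdn : Un_cv (fun n => hnorm (hsub (hn n) h) ^ 2 / lam) 0).
  { pose proof (hnorm_cv _ _ Hd) as X. rewrite hnorm_zero in X.
    replace 0 with (0 * 0 * / lam) by ring. unfold Rdiv. apply CV_mult; [|apply Un_cv_const].
    simpl. replace (fun n => hnorm (hsub (hn n) h) * (hnorm (hsub (hn n) h) * 1)) with (fun n => hnorm (hsub (hn n) h) * hnorm (hsub (hn n) h)).
    2: { apply functional_extensionality; intro; ring. }
    apply CV_mult; auto. }
  assert (Cc0 : Un_cv (fun n => hinner (zn n) (hsub (hn n) h)) 0).
  { apply (squeeze0 _ (fun n => (F f xbar (t n) (hn n) - F f xbar (t n) h + hnorm (hsub (hn n) h) ^ 2 / lam) / 2)
                      (fun n => (F f xbar (t n) (hsub (hscal 2 (hn n)) h) - F f xbar (t n) (hn n) - hnorm (hsub (hn n) h) ^ 2 / lam) / 2)).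
    - intro n. split.
      + pose proof (FS n (hsub (hscal 2 (hn n)) h)) as A.
        replace (hsub (hsub (hscal 2 (hn n)) h) (hn n)) with (hsub (hn n) h) in A by veq. lra.
      + pose proof (FS n h) as A.
        replace (hsub h (hn n)) with (hscal (-1) (hsub (hn n) h)) in A by veq.
        rewrite hinner_scal_r, hnorm_scal, Rabs_left1 in A by lra.
        replace (- -1 * hnorm (hsub (hn n) h)) with (hnorm (hsub (hn n) h)) in A by ring. lra.
    - replace 0 with ((p - p + 0) / 2) by field. unfold Rdiv. apply CV_mult; [|apply Un_cv_const].
      apply CV_plus; auto. apply CV_plus; auto. apply CV_opp in Cb; auto.
      pose proof (F_cv f lam xbar phi t (fun _ => h) h S HM Ht Ht0 (norm_cv_const h)) as X.
      apply CV_opp in X. exact X.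
    - replace 0 with ((p - p - 0) / 2) by field. unfold Rdiv. apply CV_mult; [|apply Un_cv_const].
      unfold Rminus. apply CV_plus; [apply CV_plus|].
      + apply (F_cv f lam xbar phi); auto.
        apply (norm_cv_ext (fun n => hadd (hscal 2 (hn n)) (hscal (-1) h)) _ (hadd (hscal 2 h) (hscal (-1) h))).
        * intro; veq.
        * veq.
        * apply (norm_cv_lin hn (fun _ => h)); auto. apply norm_cv_const.
      + apply CV_opp in Cb. exact Cb.
      + apply CV_opp in Hdn. exact Hdn. }
  assert (Cc : Un_cv (fun n => hinner (zn n) (hn n)) (hinner z h)).
  { replace (hinner z h) with (hinner z h + 0) by ring.
    replace (fun n => hinner (zn n) (hn n)) with (fun n => hinner (zn n) h + hinner (zn n) (hsub (hn n) h)).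
    2: { apply functional_extensionality; intro n. unfold hsub. autorewrite with ip. ring. }
    apply CV_plus; [apply Hz | exact Cc0]. }
  assert (Hnn : Un_cv (fun n => hnorm (hn n) ^ 2) (hnorm h ^ 2)).
  { simpl. apply CV_mult; [apply hnorm_cv; auto|]. apply CV_mult; [apply hnorm_cv; auto|apply Un_cv_const]. }
  assert (Key : forall s, 0 < s -> s ^ 2 * p <= p + 2 * (s - 1) * hinner z h + (s - 1) ^ 2 * hnorm h ^ 2 / lam).
  { intros s Hs.
    apply (@Rle_cv_lim (fun n => F f xbar (t n) (hscal s (hn n)))
             (fun n => F f xbar (t n) (hn n) + 2 * (s - 1) * hinner (zn n) (hn n) + (s - 1) ^ 2 * hnorm (hn n) ^ 2 / lam)).
    - intro n. pose proof (FS n (hscal s (hn n))) as A.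
      replace (hsub (hscal s (hn n)) (hn n)) with (hscal (s - 1) (hn n)) in A by veq.
      rewrite hinner_scal_r, hnorm_scal in A.
      replace ((Rabs (s - 1) * hnorm (hn n)) ^ 2) with ((s-1) ^ 2 * hnorm (hn n) ^ 2) in A.
      + lra.
      + rewrite Rpow_mult_distr, pow2_abs. reflexivity.
    - replace (fun n => F f xbar (t n) (hscal s (hn n))) with (fun n => s ^ 2 * F f xbar (t n * s) (hn n)).
      2: { apply functional_extensionality; intro n. rewrite F_scale; auto. }
      apply Un_cv_scal. apply (F_cv f lam xbar phi); auto.
      + intro n. apply Rmult_lt_0_compat; auto.
      + replace 0 with (0 * s) by ring. apply CV_mult; auto. apply Un_cv_const.
    - unfold Rdiv. apply CV_plus; [apply CV_plus; auto|].
      + apply Un_cv_scal. auto.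
      + replace ((s - 1) ^ 2 * hnorm h ^ 2 * / lam) with ((s - 1) ^ 2 * (hnorm h ^ 2 * / lam)) by ring.
        replace (fun n => (s - 1) ^ 2 * hnorm (hn n) ^ 2 * / lam) with (fun n => (s - 1) ^ 2 * (hnorm (hn n) ^ 2 * / lam)).
        2: { apply functional_extensionality; intro; ring. }
        apply Un_cv_scal. apply CV_mult; auto. apply Un_cv_const. }
  set (c := hnorm h ^ 2 / lam). fold c in Key.
  apply Rle_antisym.
  - apply (le_eps_lim _ _ ((c - p) / 2) 1); [lra|]. intros η [H0 H1].
    specialize (Key (1 - η) ltac:(lra)).
    apply (Rmult_le_reg_l (2 * η)); [lra|].
    replace ((1 - η) ^ 2 * p) with (p - 2 * η * p + η ^ 2 * p) in Key by ring.
    replace ((1 - η - 1) ^ 2 * hnorm h ^ 2 / lam) with (η ^ 2 * c) in Key by (unfold c; field; lra).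
    replace (2 * η * (p + η * ((c - p) / 2))) with (2 * η * p + η ^ 2 * c - η ^ 2 * p) by field.
    replace (2 * (1 - η - 1) * hinner z h) with (- (2 * η * hinner z h)) in Key by ring.
    lra.
  - apply (le_eps_lim _ _ ((c - p) / 2) 1); [lra|]. intros η [H0 H1].
    specialize (Key (1 + η) ltac:(lra)).
    apply (Rmult_le_reg_l (2 * η)); [lra|].
    replace ((1 + η) ^ 2 * p) with (p + 2 * η * p + η ^ 2 * p) in Key by ring.
    replace ((1 + η - 1) ^ 2 * hnorm h ^ 2 / lam) with (η ^ 2 * c) in Key by (unfold c; field; lra).
    replace (2 * η * (hinner z h + η * ((c - p) / 2))) with (2 * η * hinner z h + η ^ 2 * c - η ^ 2 * p) by field.
    replace (2 * (1 + η - 1) * hinner z h) with (2 * η * hinner z h) in Key by ring.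
    lra.
Qed.
Definition Pc {H : HilbertSpace} (phi : H -> ereal) beta : Prop :=
  forall h : H, unit_sphere h -> beta <= fv phi h.

Lemma first_iff {H : HilbertSpace} (f : H -> ereal) lam xbar phi :
  Setting f lam xbar -> MoscoHyp f xbar phi ->
  (SOC_first f xbar <-> exists beta, 0 < beta /\ Pc phi beta).
Proof.
  intros S HM. split.
  - intros [b [Hb Hall]]. exists b. split; auto. intros h Hh. apply (SG1 f lam xbar phi); auto.
  - intros [b [Hb Hall]]. exists b. split; auto. intros h Hh. apply (SG2 f lam xbar phi); auto.
Qed.

Lemma second_iff {H : HilbertSpace} (f : H -> ereal) lam xbar phi :
  Setting f lam xbar -> MoscoHyp f xbar phi -> (forall h, exists z, T_M f xbar hzero h z) ->
  (SOC_second f xbar <-> exists beta, 0 < beta /\ Pc phi beta).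
Proof.
  intros S HM Dens. split.
  - intros [b [Hb Hall]]. exists b. split; auto. intros h Hh.
    destruct (Hall h (Dens h) Hh) as [z [Hz Hzh]]. rewrite <- (TM_eq f lam xbar phi h z S HM Hz). auto.
  - intros [b [Hb Hall]]. exists b. split; auto. intros h [z Hz] Hh. exists z. split; auto.
    rewrite (TM_eq f lam xbar phi h z S HM Hz). auto.
Qed.

Lemma third_iff {H : HilbertSpace} (f : H -> ereal) lam xbar phi :
  Setting f lam xbar -> MoscoHyp f xbar phi -> (forall h, exists z, T_M f xbar hzero h z) ->
  (forall b : H, exists a : H, N_M f xbar hzero a b) ->
  (SOC_third f xbar <-> exists beta, 0 < beta /\ Pc phi beta).
Proof.
  intros S HM Dens Proj. split.
  - intros [b [Hb Hall]]. exists b. split; auto. intros h Hh.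
    destruct (Proj (hopp h)) as [z Hz].
    specialize (Hall h z Hh (ex_intro _ z Hz) Hz).
    destruct (Dens h) as [z0 Hz0]. specialize (Hz h z0 Hz0).
    rewrite hinner_opp_l, (hinner_sym h z0), (TM_eq f lam xbar phi h z0 S HM Hz0) in Hz. lra.
  - intros [b [Hb Hall]]. exists b. split; auto. intros h z Hh _ Hz.
    destruct (Proj h) as [a Ha].
    assert (Ez : a = hopp z).
    { destruct (Dens (hadd a z)) as [z1 Hz1].
      pose proof (Ha _ _ Hz1) as A. pose proof (Hz _ _ Hz1) as B.
      rewrite hinner_opp_l in B.
      assert (C : hinner (hadd a z) (hadd a z) <= 0).
      { rewrite hinner_add_r, (hinner_sym (hadd a z) a), (hinner_sym (hadd a z) z). lra. }
      pose proof (hinner_pos (hadd a z)).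
      assert (Z : hadd a z = hzero) by (apply hinner_def; lra).
      replace a with (hadd (hadd a z) (hopp z)) by veq. rewrite Z, hadd_zero. reflexivity. }
    subst a. destruct (Dens h) as [z0 Hz0]. specialize (Ha h z0 Hz0).
    rewrite hinner_opp_l, (hinner_sym h z0), (TM_eq f lam xbar phi h z0 S HM Hz0) in Ha.
    specialize (Hall h Hh). lra.
Qed.

Lemma main_with_dens {H : HilbertSpace} (f : H -> ereal) lam xbar phi :
  Setting f lam xbar -> MoscoHyp f xbar phi -> (forall h, exists z, T_M f xbar hzero h z) ->
  (forall b : H, exists a : H, N_M f xbar hzero a b) ->
  (SOC_first f xbar <-> SOC_second f xbar) /\ (SOC_second f xbar <-> SOC_third f xbar).
Proof.
  intros S HM Dens Proj.
  rewrite (first_iff f lam xbar phi S HM), (second_iff f lam xbar phi S HM Dens),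
          (third_iff f lam xbar phi S HM Dens Proj). tauto.
Qed.
Lemma near_min {H : HilbertSpace} (B : H -> Prop) (Phi : H -> R) m x eps :
  (forall y, B y -> m <= Phi y) -> B x -> 0 < eps ->
  exists y, B y /\ Phi y <= Phi x /\ forall w, B w -> Phi y <= Phi w + eps.
Proof.
  intros Hm Bx He.
  set (E := fun r => exists w, B w /\ r = - Phi w).
  assert (Hb : bound E). { exists (- m). intros r [w [Bw ->]]. specialize (Hm w Bw). lra. }
  assert (Hne : exists r, E r) by (exists (- Phi x); exists x; auto).
  destruct (completeness E Hb Hne) as [s [Hs1 Hs2]].
  assert (Hex : exists w, B w /\ s - eps < - Phi w).
  { apply NNPP. intro Hn. assert (s <= s - eps); [|lra].
    apply Hs2. intros r [w [Bw ->]]. apply Rnot_lt_le. intro Hlt. apply Hn. exists w. auto. }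
  destruct Hex as [w [Bw Hw]].
  assert (Hall : forall w', B w' -> Phi w < Phi w' + eps).
  { intros w' Bw'. assert (- Phi w' <= s) by (apply Hs1; exists w'; auto). lra. }
  destruct (Rle_dec (Phi w) (Phi x)).
  - exists w. split; [|split]; auto. intros w' Bw'. left. apply Hall; auto.
  - exists x. split; [|split]; auto. lra. intros w' Bw'. specialize (Hall w' Bw'). lra.
Qed.

Lemma cauchy_lim {H : HilbertSpace} (u : nat -> H) (d : nat -> R) :
  (forall k m, (k < m)%nat -> hnorm (hsub (u m) (u k)) <= d k) -> Un_cv d 0 ->
  exists l, norm_cv u l /\ forall k, hnorm (hsub l (u k)) <= d k.
Proof.
  intros Hc Hd.
  assert (Hd0 : forall k, 0 <= d k).
  { intro k. specialize (Hc k (S k) ltac:(lia)). pose proof (hnorm_ge0 (hsub (u (S k)) (u k))). lra. }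
  destruct (hcomplete u) as [l Hl].
  { intros eps He. destruct (Un_cv_small d 0 Hd (eps / 2) ltac:(lra)) as [N HN]. exists N.
    intros m n Hm Hn. fold (hsub (u m) (u n)). fold (hnorm (hsub (u m) (u n))).
    destruct (Nat.lt_trichotomy m n) as [Hlt|[Heq|Hgt]].
    - rewrite hnorm_sub_sym. specialize (Hc m n Hlt). specialize (HN m Hm). lra.
    - subst. replace (hsub (u n) (u n)) with (@hzero H) by veq. rewrite hnorm_zero. lra.
    - specialize (Hc n m Hgt). specialize (HN n Hn). lra. }
  exists l. split; [exact Hl|]. intro k.
  apply (le_eps_lim _ _ 1 1); [lra|]. intros th [Ht0 Ht1].
  destruct (norm_cv_small u l Hl th Ht0) as [N HN].
  specialize (HN (S (N + k)) ltac:(lia)). specialize (Hc k (S (N + k)) ltac:(lia)).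
  pose proof (hnorm_sub_tri l (u (S (N + k))) (u k)). rewrite (hnorm_sub_sym l (u (S (N + k)))) in H0. lra.
Qed.

Lemma fin_lt {H : HilbertSpace} (f : H -> ereal) r y : f y = Fin (fv f y) -> ere_lt (Fin r) (f y) <-> r < fv f y.
Proof. intros E. rewrite E. simpl. tauto. Qed.

Lemma lsc_seq {H : HilbertSpace} (f : H -> ereal) (q : H -> R) (ym : nat -> H) y v k0 :
  lsc f -> (forall y, f y = Fin (fv f y)) -> Un_cv (fun m => q (ym m)) (q y) -> norm_cv ym y ->
  (forall m, (m >= k0)%nat -> fv f (ym m) + q (ym m) <= v) -> fv f y + q y <= v.
Proof.
  intros Hl Hfin Hq Hy Hle. apply Rnot_lt_le. intro Hlt.
  set (g := (fv f y + q y - v) / 2).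
  assert (Hg : 0 < g) by (unfold g; lra).
  destruct (Hl y (v - q y + g) ltac:(rewrite (fin_lt f _ y (Hfin y)); unfold g; lra)) as [dl [Hdl Hd]].
  destruct (ev_and _ _ (norm_cv_small ym y Hy dl Hdl) (Un_cv_small _ _ Hq g Hg)) as [N HN].
  destruct (HN (N + k0)%nat ltac:(lia)) as [A B].
  specialize (Hd _ A). rewrite (fin_lt f _ _ (Hfin _)) in Hd.
  specialize (Hle (N + k0)%nat ltac:(lia)). lra.
Qed.

Lemma half_pow_cv c : Un_cv (fun k => c * (/ 2) ^ k) 0.
Proof.
  replace 0 with (c * 0) by ring. apply Un_cv_scal.
  apply Un_cv_intro. intros eps He.
  destruct (pow_lt_1_zero (/ 2) ltac:(rewrite Rabs_right; lra) eps He) as [N HN].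
  exists N. intros n Hn. specialize (HN n Hn). rewrite Rabs_right in HN.
  2: { apply Rle_ge, pow_le. lra. }
  pose proof (pow_le (/2) n ltac:(lra)). lra.
Qed.

Lemma inner_cv {H : HilbertSpace} (ym : nat -> H) y v : norm_cv ym y -> Un_cv (fun m => hinner (ym m) v) (hinner y v).
Proof.
  intro Hy. apply Un_cv_intro. intros eps He.
  destruct (norm_cv_small ym y Hy (eps / (hnorm v + 1))) as [N HN].
  { apply Rdiv_lt_0_compat; [lra|]. pose proof (hnorm_ge0 v). lra. }
  exists N. intros n Hn. specialize (HN n Hn).
  pose proof (cauchy_schwarz (hsub (ym n) y) v) as CS.
  replace (hinner (hsub (ym n) y) v) with (hinner (ym n) v - hinner y v) in CS by (unfold hsub; autorewrite with ip; ring).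
  pose proof (hnorm_ge0 v). pose proof (hnorm_ge0 (hsub (ym n) y)).
  assert (hnorm (hsub (ym n) y) * hnorm v <= eps / (hnorm v + 1) * hnorm v) by (apply Rmult_le_compat_r; lra).
  assert (eps / (hnorm v + 1) * hnorm v < eps).
  { apply (Rmult_lt_reg_r (hnorm v + 1)); [lra|].
    replace (eps / (hnorm v + 1) * hnorm v * (hnorm v + 1)) with (eps * hnorm v) by (field; lra). nra. }
  assert (Rabs (hinner (ym n) v - hinner y v) < eps) by lra.
  apply Rabs_def2 in H4. lra.
Qed.
(* ---------- Borwein-Preiss type construction ---------- *)
Definition Qf {H : HilbertSpace} (q : R * H * R) (y : H) : R :=
  fst (fst q) * hnorm y ^ 2 - 2 * hinner y (snd (fst q)) + snd q.

Definition qupd {H : HilbertSpace} (c : R) (x : H) (q : R * H * R) : R * H * R :=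
  (fst (fst q) + c, hadd (snd (fst q)) (hscal c x), snd q + c * hnorm x ^ 2).

Lemma Qf_upd {H : HilbertSpace} c (x : H) q y : Qf (qupd c x q) y = Qf q y + c * hnorm (hsub y x) ^ 2.
Proof. unfold Qf, qupd. cbn [fst snd]. rewrite !hnorm_sq. unfold hsub. autorewrite with ip. ipnorm. ring. Qed.

Definition PhiBP {H : HilbertSpace} (f : H -> ereal) q (y : H) : R := fv f y + Qf q y.

Definition pickBP {H : HilbertSpace} (f : H -> ereal) (x0 : H) (rho : R) q (x : H) (e : R) : H :=
  epsilon (inhabits x0) (fun y => hnorm (hsub y x0) <= rho /\ PhiBP f q y <= PhiBP f q x /\
     forall w, hnorm (hsub w x0) <= rho -> PhiBP f q y <= PhiBP f q w + e).

Definition cc (c0 : R) (k : nat) : R := c0 * (/ 2) ^ k.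
Definition dd (eta : R) (k : nat) : R := eta * (/ 2) ^ k.
Definition EE (c0 eta : R) (k : nat) : R := cc c0 k * dd eta k ^ 2.

Fixpoint bp {H : HilbertSpace} (f : H -> ereal) (x0 : H) (rho c0 eta : R) (k : nat) : H * (R * H * R) :=
  match k with
  | O => (x0, (0, hzero, 0))
  | S k' => let p := bp f x0 rho c0 eta k' in
            let q' := qupd (cc c0 k') (fst p) (snd p) in
            (pickBP f x0 rho q' (fst p) (EE c0 eta (S k')), q')
  end.

Definition BPH {H : HilbertSpace} (f : H -> ereal) (x0 : H) (rho c0 eta m : R) : Prop :=
  (forall y, f y = Fin (fv f y)) /\ 0 < rho /\ 0 < eta /\ 0 < c0 /\
  (forall y, hnorm (hsub y x0) <= rho -> m <= fv f y) /\ fv f x0 <= m + c0 * eta ^ 2.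

Lemma cc_pos c0 k : 0 < c0 -> 0 < cc c0 k.
Proof. intro. unfold cc. apply Rmult_lt_0_compat; auto. apply pow_lt. lra. Qed.
Lemma dd_pos eta k : 0 < eta -> 0 < dd eta k.
Proof. intro. unfold dd. apply Rmult_lt_0_compat; auto. apply pow_lt. lra. Qed.

Lemma Qf_nonneg {H : HilbertSpace} f (x0 : H) rho c0 eta k y : 0 < c0 ->
  0 <= Qf (snd (bp f x0 rho c0 eta k)) y.
Proof.
  intro Hc. induction k as [|k IH].
  - unfold Qf. simpl. rewrite hinner_zero_r. lra.
  - simpl. rewrite Qf_upd. pose proof (cc_pos c0 k Hc). pose proof (pow2_ge_0 (hnorm (hsub y (fst (bp f x0 rho c0 eta k))))). nra.
Qed.

Lemma bp_spec {H : HilbertSpace} f (x0 : H) rho c0 eta m k :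
  BPH f x0 rho c0 eta m ->
  hnorm (hsub (fst (bp f x0 rho c0 eta k)) x0) <= rho /\
  forall w, hnorm (hsub w x0) <= rho ->
    PhiBP f (snd (bp f x0 rho c0 eta k)) (fst (bp f x0 rho c0 eta k)) <= PhiBP f (snd (bp f x0 rho c0 eta k)) w + EE c0 eta k.
Proof.
  intros [Hfin [Hr [He [Hc [Hm Hx0]]]]]. induction k as [|k [IH1 IH2]].
  - simpl. split.
    + replace (hsub x0 x0) with (@hzero H) by veq. rewrite hnorm_zero. lra.
    + intros w Hw. unfold PhiBP, Qf, EE, cc, dd. simpl. rewrite !hinner_zero_r. specialize (Hm w Hw). nra.
  - simpl. set (p := bp f x0 rho c0 eta k) in *. set (q' := qupd (cc c0 k) (fst p) (snd p)).
    assert (Hex : exists y, hnorm (hsub y x0) <= rho /\ PhiBP f q' y <= PhiBP f q' (fst p) /\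
       forall w, hnorm (hsub w x0) <= rho -> PhiBP f q' y <= PhiBP f q' w + EE c0 eta (S k)).
    { apply (near_min (fun y => hnorm (hsub y x0) <= rho) (PhiBP f q') m); auto.
      - intros y Hy. unfold PhiBP, q'. rewrite Qf_upd. pose proof (Qf_nonneg f x0 rho c0 eta k y Hc).
        pose proof (cc_pos c0 k Hc). pose proof (pow2_ge_0 (hnorm (hsub y (fst p)))). specialize (Hm y Hy). fold p in H0. nra.
      - unfold EE. pose proof (cc_pos c0 (S k) Hc). pose proof (dd_pos eta (S k) He). apply Rmult_lt_0_compat; [lra | apply pow_lt; lra]. }
    pose proof (epsilon_spec (inhabits x0) _ Hex) as P. fold (pickBP f x0 rho q' (fst p) (EE c0 eta (S k))) in P.
    destruct P as [P1 [P2 P3]]. split; auto.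
Qed.

Lemma bp_step {H : HilbertSpace} f (x0 : H) rho c0 eta m k :
  BPH f x0 rho c0 eta m ->
  PhiBP f (snd (bp f x0 rho c0 eta (S k))) (fst (bp f x0 rho c0 eta (S k))) <=
  PhiBP f (snd (bp f x0 rho c0 eta k)) (fst (bp f x0 rho c0 eta k)).
Proof.
  intro HB. pose proof HB as [Hfin [Hr [He [Hc [Hm Hx0]]]]].
  destruct (bp_spec f x0 rho c0 eta m k HB) as [B1 _].
  simpl. set (p := bp f x0 rho c0 eta k) in *. set (q' := qupd (cc c0 k) (fst p) (snd p)).
  assert (Hex : exists y, hnorm (hsub y x0) <= rho /\ PhiBP f q' y <= PhiBP f q' (fst p) /\
       forall w, hnorm (hsub w x0) <= rho -> PhiBP f q' y <= PhiBP f q' w + EE c0 eta (S k)).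
  { apply (near_min (fun y => hnorm (hsub y x0) <= rho) (PhiBP f q') m); auto.
    - intros y Hy. unfold PhiBP, q'. rewrite Qf_upd. pose proof (Qf_nonneg f x0 rho c0 eta k y Hc).
      pose proof (cc_pos c0 k Hc). pose proof (pow2_ge_0 (hnorm (hsub y (fst p)))). specialize (Hm y Hy). fold p in H0. nra.
    - unfold EE. pose proof (cc_pos c0 (S k) Hc). pose proof (dd_pos eta (S k) He). apply Rmult_lt_0_compat; [lra | apply pow_lt; lra]. }
  pose proof (epsilon_spec (inhabits x0) _ Hex) as P. fold (pickBP f x0 rho q' (fst p) (EE c0 eta (S k))) in P.
  destruct P as [P1 [P2 P3]]. eapply Rle_trans; [exact P2|].
  unfold PhiBP, q'. rewrite Qf_upd. replace (hsub (fst p) (fst p)) with (@hzero H) by veq. rewrite hnorm_zero. lra.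
Qed.
Lemma Qf_mono {H : HilbertSpace} f (x0 : H) rho c0 eta k j y : 0 < c0 ->
  Qf (snd (bp f x0 rho c0 eta k)) y <= Qf (snd (bp f x0 rho c0 eta (k + j))) y.
Proof.
  intro Hc. induction j as [|j IH].
  - rewrite Nat.add_0_r. lra.
  - rewrite Nat.add_succ_r. simpl. rewrite Qf_upd.
    pose proof (cc_pos c0 (k + j) Hc). pose proof (pow2_ge_0 (hnorm (hsub y (fst (bp f x0 rho c0 eta (k + j)))))). nra.
Qed.

Lemma Phi_mono {H : HilbertSpace} f (x0 : H) rho c0 eta m k j :
  BPH f x0 rho c0 eta m ->
  PhiBP f (snd (bp f x0 rho c0 eta (k + j))) (fst (bp f x0 rho c0 eta (k + j))) <=
  PhiBP f (snd (bp f x0 rho c0 eta k)) (fst (bp f x0 rho c0 eta k)).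
Proof.
  intro HB. induction j as [|j IH].
  - rewrite Nat.add_0_r. lra.
  - rewrite Nat.add_succ_r. eapply Rle_trans; [apply (bp_step f x0 rho c0 eta m); auto|]. exact IH.
Qed.

Lemma cc_dd {H : HilbertSpace} c0 eta (v : H) k : 0 < c0 -> 0 < eta ->
  cc c0 k * hnorm v ^ 2 <= EE c0 eta k -> hnorm v <= dd eta k.
Proof.
  intros Hc He Hv. unfold EE in Hv. pose proof (cc_pos c0 k Hc). pose proof (dd_pos eta k He).
  assert (hnorm v ^ 2 <= dd eta k ^ 2).
  { apply (Rmult_le_reg_l (cc c0 k)); auto. }
  pose proof (hnorm_ge0 v). nra.
Qed.

Lemma bp_close {H : HilbertSpace} f (x0 : H) rho c0 eta m k w :
  BPH f x0 rho c0 eta m -> hnorm (hsub w x0) <= rho ->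
  PhiBP f (snd (bp f x0 rho c0 eta (S k))) w <= PhiBP f (snd (bp f x0 rho c0 eta k)) (fst (bp f x0 rho c0 eta k)) ->
  hnorm (hsub w (fst (bp f x0 rho c0 eta k))) <= dd eta k.
Proof.
  intros HB Hw Hle. pose proof HB as [Hfin [Hr [He [Hc [Hm Hx0]]]]].
  destruct (bp_spec f x0 rho c0 eta m k HB) as [_ S2]. specialize (S2 w Hw).
  apply (cc_dd c0 eta); auto. simpl in Hle. unfold PhiBP in *. rewrite Qf_upd in Hle. lra.
Qed.

Lemma bp_cauchy {H : HilbertSpace} f (x0 : H) rho c0 eta m k n :
  BPH f x0 rho c0 eta m -> (k < n)%nat ->
  hnorm (hsub (fst (bp f x0 rho c0 eta n)) (fst (bp f x0 rho c0 eta k))) <= dd eta k.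
Proof.
  intros HB Hkn. pose proof HB as [Hfin [Hr [He [Hc [Hm Hx0]]]]].
  destruct (bp_spec f x0 rho c0 eta m n HB) as [Bn _].
  apply (bp_close f x0 rho c0 eta m); auto.
  replace n with (S k + (n - S k))%nat in * by lia.
  set (xn := fst (bp f x0 rho c0 eta (S k + (n - S k)))).
  pose proof (Qf_mono f x0 rho c0 eta (S k) (n - S k) xn Hc) as A.
  pose proof (Phi_mono f x0 rho c0 eta m (S k) (n - S k) HB) as B.
  pose proof (Phi_mono f x0 rho c0 eta m k 1 HB) as C. rewrite Nat.add_1_r in C.
  unfold PhiBP in *. fold xn in B. lra.
Qed.
Lemma bp_C {H : HilbertSpace} f (x0 : H) rho c0 eta k :
  fst (fst (snd (bp f x0 rho c0 eta k))) = 2 * c0 * (1 - (/ 2) ^ k).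
Proof.
  induction k as [|k IH].
  - simpl. ring.
  - simpl. rewrite IH. unfold cc. field.
Qed.

Lemma bp_xbound {H : HilbertSpace} f (x0 : H) rho c0 eta m k :
  BPH f x0 rho c0 eta m -> hnorm (fst (bp f x0 rho c0 eta k)) <= hnorm x0 + rho.
Proof.
  intro HB. destruct (bp_spec f x0 rho c0 eta m k HB) as [B _].
  pose proof (hnorm_triangle (hsub (fst (bp f x0 rho c0 eta k)) x0) x0).
  replace (hadd (hsub (fst (bp f x0 rho c0 eta k)) x0) x0) with (fst (bp f x0 rho c0 eta k)) in H0 by veq. lra.
Qed.

Lemma bp_S_step {H : HilbertSpace} f (x0 : H) rho c0 eta m k j :
  BPH f x0 rho c0 eta m ->
  hnorm (hsub (snd (fst (snd (bp f x0 rho c0 eta (k + j))))) (snd (fst (snd (bp f x0 rho c0 eta k)))))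
   <= (fst (fst (snd (bp f x0 rho c0 eta (k + j)))) - fst (fst (snd (bp f x0 rho c0 eta k)))) * (hnorm x0 + rho).
Proof.
  intro HB. pose proof HB as [Hfin [Hr [He [Hc [Hm Hx0]]]]]. induction j as [|j IH].
  - rewrite Nat.add_0_r. replace (hsub _ _) with (@hzero H) by veq. rewrite hnorm_zero.
    pose proof (hnorm_ge0 x0). nra.
  - rewrite Nat.add_succ_r. simpl.
    set (p := bp f x0 rho c0 eta (k + j)) in *. set (p0 := bp f x0 rho c0 eta k) in *.
    pose proof (bp_xbound f x0 rho c0 eta m (k + j) HB) as XB. fold p in XB.
    replace (hsub (hadd (snd (fst (snd p))) (hscal (cc c0 (k + j)) (fst p))) (snd (fst (snd p0))))
      with (hadd (hsub (snd (fst (snd p))) (snd (fst (snd p0)))) (hscal (cc c0 (k + j)) (fst p))) by veq.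
    eapply Rle_trans; [apply hnorm_triangle|]. rewrite hnorm_scal, Rabs_right.
    2: { apply Rle_ge. left. apply cc_pos; auto. }
    pose proof (cc_pos c0 (k + j) Hc).
    assert (cc c0 (k + j) * hnorm (fst p) <= cc c0 (k + j) * (hnorm x0 + rho)) by (apply Rmult_le_compat_l; lra).
    nra.
Qed.

Lemma bp_S_cauchy {H : HilbertSpace} f (x0 : H) rho c0 eta m :
  BPH f x0 rho c0 eta m ->
  exists S, norm_cv (fun k => snd (fst (snd (bp f x0 rho c0 eta k)))) S.
Proof.
  intro HB. pose proof HB as [Hfin [Hr [He [Hc [Hm Hx0]]]]].
  assert (HR : 0 <= hnorm x0 + rho) by (pose proof (hnorm_ge0 x0); lra).
  destruct (cauchy_lim (fun k => snd (fst (snd (bp f x0 rho c0 eta k)))) (fun k => (2 * c0 * (hnorm x0 + rho)) * (/2) ^ k))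
    as [S [HS _]].
  - intros k n Hkn. replace n with (k + (n - k))%nat by lia.
    eapply Rle_trans; [apply (bp_S_step f x0 rho c0 eta m k (n - k) HB)|].
    rewrite !bp_C. pose proof (pow_le (/2) (k + (n - k)) ltac:(lra)).
    set (b := (/ 2) ^ (k + (n - k))) in *. set (a := (/2) ^ k).
    assert (0 <= c0 * (hnorm x0 + rho) * b) by (apply Rmult_le_pos; [apply Rmult_le_pos|]; lra).
    replace ((2 * c0 * (1 - b) - 2 * c0 * (1 - a)) * (hnorm x0 + rho)) with (2 * c0 * (hnorm x0 + rho) * a - 2 * (c0 * (hnorm x0 + rho) * b)) by ring.
    lra.
  - apply half_pow_cv.
  - exists S. exact HS.
Qed.
Lemma Qf_cv {H : HilbertSpace} q (ym : nat -> H) y : norm_cv ym y -> Un_cv (fun m => Qf q (ym m)) (Qf q y).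
Proof.
  intro Hy. unfold Qf. unfold Rminus. apply CV_plus; [apply CV_plus|].
  - apply Un_cv_scal. simpl. apply CV_mult; [apply hnorm_cv; auto|]. apply CV_mult; [apply hnorm_cv; auto|apply Un_cv_const].
  - apply CV_opp. apply Un_cv_scal. apply inner_cv; auto.
  - apply Un_cv_const.
Qed.

Lemma BP_main {H : HilbertSpace} f (x0 : H) rho c0 eta m :
  lsc f -> BPH f x0 rho c0 eta m -> eta < rho ->
  exists x z, hnorm (hsub x x0) <= eta /\ prox_subdiff f x z.
Proof.
  intros Hlsc HB Her. pose proof HB as [Hfin [Hr [He [Hc [Hm Hx0]]]]].
  set (xs := fun k => fst (bp f x0 rho c0 eta k)).
  set (qs := fun k => snd (bp f x0 rho c0 eta k)).
  destruct (cauchy_lim xs (dd eta)) as [xi [Hxi Hxik]].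
  { intros k n Hkn. apply (bp_cauchy f x0 rho c0 eta m); auto. }
  { apply half_pow_cv. }
  assert (Hx0' : hnorm (hsub xi x0) <= eta).
  { specialize (Hxik O). unfold xs, dd in Hxik. simpl in Hxik. lra. }
  destruct (bp_S_cauchy f x0 rho c0 eta m HB) as [Sl HS].
  assert (HC : Un_cv (fun k => fst (fst (qs k))) (2 * c0)).
  { unfold qs. replace (fun k => fst (fst (snd (bp f x0 rho c0 eta k)))) with (fun k => 2 * c0 - 2 * c0 * (/2) ^ k).
    2: { apply functional_extensionality. intro k. rewrite bp_C. ring. }
    pose proof (CV_plus _ _ _ _ (Un_cv_const (2*c0)) (CV_opp _ _ (half_pow_cv (2*c0)))) as X.
    unfold opp_seq in X. rewrite Ropp_0, Rplus_0_r in X. exact X. }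
  assert (CA : forall k, PhiBP f (qs k) xi <= PhiBP f (qs k) (xs k)).
  { intro k. unfold PhiBP. apply (lsc_seq f (Qf (qs k)) xs xi _ k Hlsc Hfin); auto.
    - apply Qf_cv; auto.
    - intros n Hn. replace n with (k + (n - k))%nat by lia.
      pose proof (Qf_mono f x0 rho c0 eta k (n - k) (xs (k + (n - k))%nat) Hc).
      pose proof (Phi_mono f x0 rho c0 eta m k (n - k) HB). unfold PhiBP in H1. unfold xs, qs in *. lra. }
  assert (G : forall w, hnorm (hsub w x0) <= rho ->
             0 <= fv f w - fv f xi + (2 * c0 * (hnorm w ^ 2 - hnorm xi ^ 2) - 2 * (hinner Sl w - hinner Sl xi))).
  { intros w Hw. apply Rnot_lt_le. intro Hlt.
    set (L := 2 * c0 * (hnorm w ^ 2 - hnorm xi ^ 2) - 2 * (hinner Sl w - hinner Sl xi)) in *.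
    assert (HL : Un_cv (fun k => Qf (qs k) w - Qf (qs k) xi) L).
    { replace (fun k => Qf (qs k) w - Qf (qs k) xi) with
        (fun k => fst (fst (qs k)) * (hnorm w ^ 2 - hnorm xi ^ 2) - 2 * (hinner (snd (fst (qs k))) w - hinner (snd (fst (qs k))) xi)).
      2: { apply functional_extensionality. intro k. unfold Qf. rewrite (hinner_sym w), (hinner_sym xi). ring. }
      unfold L, Rminus. apply CV_plus.
      - apply CV_mult; auto. apply Un_cv_const.
      - apply CV_opp. apply Un_cv_scal. apply CV_plus; [apply inner_cv; auto|]. apply CV_opp, inner_cv; auto. }
    set (g := fv f w - fv f xi + L) in *.
    destruct (Un_cv_small _ _ HL (- g) ltac:(lra)) as [N HN].
    assert (Hclose : forall k, (k >= N)%nat -> hnorm (hsub w (xs k)) <= dd eta k).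
    { intros k Hk. apply (bp_close f x0 rho c0 eta m); auto.
      specialize (HN (S k) ltac:(lia)). specialize (CA (S k)).
      pose proof (bp_step f x0 rho c0 eta m k HB).
      unfold PhiBP, xs, qs, g in *. lra. }
    assert (Hz : hnorm (hsub w xi) <= 0).
    { apply (ev_le_lim (fun k => 2 * dd eta k)).
      - replace 0 with (2 * 0) by ring. apply Un_cv_scal. apply half_pow_cv.
      - exists N. intros k Hk. specialize (Hclose k Hk). specialize (Hxik k).
        pose proof (hnorm_sub_tri w (xs k) xi). rewrite (hnorm_sub_sym (xs k) xi) in H0.
        assert (dd eta k <= dd eta k) by lra. lra. }
    assert (Ew : w = xi).
    { apply vec_eq. fold (hsub w xi). rewrite <- hnorm_sq'. pose proof (hnorm_ge0 (hsub w xi)).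
      replace (hnorm (hsub w xi)) with 0 by lra. ring. }
    subst w. unfold g, L in Hlt. lra. }
  exists xi, (hsub (hscal 2 Sl) (hscal (4 * c0) xi)). split; auto.
  exists (fv f xi). split; [apply Hfin|].
  exists (4 * c0), (rho - eta). split; [lra|]. split; [lra|].
  intros y Hy. rewrite (Hfin y). simpl.
  assert (Hy0 : hnorm (hsub y x0) <= rho).
  { pose proof (hnorm_sub_tri y xi x0). lra. }
  specialize (G y Hy0). rewrite Rmult_1_r, hnorm_sq'. rewrite !hnorm_sq in G. unfold hsub in *. autorewrite with ip in *. ipnorm.
  rewrite (hinner_sym Sl y) in *. rewrite (hinner_sym Sl xi) in *. 
  lra.
Qed.
Lemma half_pow_decr k n : (k <= n)%nat -> (/ 2) ^ n <= (/ 2) ^ k.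
Proof.
  intro Hkn. replace n with (k + (n - k))%nat by lia. rewrite pow_add.
  pose proof (pow_le (/2) k ltac:(lra)).
  assert ((/ 2) ^ (n - k) <= 1).
  { induction (n - k)%nat as [|j IH]; simpl; [lra|]. pose proof (pow_le (/2) j ltac:(lra)). lra. }
  nra.
Qed.

Definition csub {H : HilbertSpace} (W : H -> Prop) : Prop :=
  W hzero /\ (forall u v, W u -> W v -> W (hadd u v)) /\ (forall a u, W u -> W (hscal a u)) /\
  (forall u, (forall eps, 0 < eps -> exists w, W w /\ hnorm (hsub u w) < eps) -> W u).

Definition linW {H : HilbertSpace} (W : H -> Prop) (l : H -> R) (L : R) : Prop :=
  (forall u v, W u -> W v -> l (hadd u v) = l u + l v) /\ (forall a u, W u -> l (hscal a u) = a * l u) /\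
  (forall u, W u -> Rabs (l u) <= L * hnorm u).

Lemma quad_zero a b : 0 <= b -> (forall s, 0 <= s * a + s ^ 2 * b) -> a = 0.
Proof.
  intros Hb Hall. destruct (Req_dec a 0) as [|Ha]; auto. exfalso.
  specialize (Hall (- a / (2 * b + 1))).
  assert (E : - a / (2 * b + 1) * a + (- a / (2 * b + 1)) ^ 2 * b = - (a * a) * (b + 1) / ((2 * b + 1) * (2 * b + 1))) by (field; lra).
  rewrite E in Hall. assert (0 < a * a) by (apply Rsqr_pos_lt in Ha; exact Ha).
  assert (0 < (a * a) * (b + 1) / ((2 * b + 1) * (2 * b + 1))).
  { apply Rdiv_lt_0_compat; [nra|]. nra. }
  lra.
Qed.

Lemma riesz_W {H : HilbertSpace} (W : H -> Prop) (l : H -> R) (L : R) :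
  csub W -> linW W l L -> 0 <= L -> exists z, W z /\ forall w, W w -> l w = hinner z w.
Proof.
  intros [W0 [Wadd [Wscal Wcl]]] [ladd [lscal lbd]] HL.
  set (J := fun w => hnorm w ^ 2 / 2 - l w).
  assert (Jlb : forall w, W w -> - (L * L) / 2 <= J w).
  { intros w Hw. unfold J. specialize (lbd w Hw). pose proof (Rle_abs (l w)). pose proof (hnorm_ge0 w).
    assert (0 <= (hnorm w - L) ^ 2) by apply pow2_ge_0. nra. }
  set (E := fun r => exists w, W w /\ r = - J w).
  assert (Hb : bound E) by (exists (L * L / 2); intros r [w [Hw ->]]; specialize (Jlb w Hw); lra).
  assert (Hne : exists r, E r) by (exists (- J hzero); exists hzero; auto).
  destruct (completeness E Hb Hne) as [s [Hs1 Hs2]].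
  assert (Jge : forall w, W w -> - s <= J w).
  { intros w Hw. assert (- J w <= s) by (apply Hs1; exists w; auto). lra. }
  set (e := fun j : nat => ((/ 2) ^ j) ^ 2 / 8).
  assert (He : forall j, 0 < e j) by (intro j; unfold e; apply Rdiv_lt_0_compat; [apply pow_lt, pow_lt; lra|lra]).
  assert (Hseq : forall j, exists w, W w /\ J w < - s + e j).
  { intro j. apply NNPP. intro Hn. assert (s <= s - e j); [|specialize (He j); lra].
    apply Hs2. intros r [w [Hw ->]]. apply Rnot_lt_le. intro Hlt. apply Hn. exists w. split; auto. lra. }
  apply fchoice in Hseq. destruct Hseq as [ws Hws].
  assert (Mid : forall a b, W a -> W b ->
     hnorm (hsub a b) ^ 2 = 4 * J a + 4 * J b - 8 * J (hscal (1/2) (hadd a b))).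
  { intros a b Ha Hb'. unfold J. rewrite lscal, ladd by auto. rewrite !hnorm_sq.
    unfold hsub. autorewrite with ip. ipnorm. field. }
  assert (Hc : forall k n, (k < n)%nat -> hnorm (hsub (ws n) (ws k)) <= (/ 2) ^ k).
  { intros k n Hkn. destruct (Hws k) as [Wk Jk]. destruct (Hws n) as [Wn Jn].
    pose proof (Mid (ws n) (ws k) Wn Wk) as M.
    pose proof (Jge _ (Wscal (1/2) _ (Wadd _ _ Wn Wk))) as G.
    assert (e n <= e k).
    { unfold e. apply Rmult_le_compat_r; [lra|]. apply pow_incr. split; [apply pow_le; lra|].
      apply half_pow_decr. lia. }
    assert (hnorm (hsub (ws n) (ws k)) ^ 2 <= ((/ 2) ^ k) ^ 2) by (unfold e in *; lra).
    pose proof (hnorm_ge0 (hsub (ws n) (ws k))). pose proof (pow_le (/2) k ltac:(lra)). nra. }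
  destruct (cauchy_lim ws (fun k => (/2) ^ k) Hc) as [z [Hz Hzk]].
  { replace (fun k => (/ 2) ^ k) with (fun k => 1 * (/ 2) ^ k) by (apply functional_extensionality; intro; ring).
    apply half_pow_cv. }
  assert (Wz : W z).
  { apply Wcl. intros eps Heps.
    destruct (Un_cv_small _ _ (half_pow_cv 1) eps Heps) as [N HN].
    exists (ws N). split; [apply (Hws N)|]. specialize (Hzk N). specialize (HN N (le_n N)). lra. }
  assert (HJ : Un_cv (fun k => J (ws k)) (J z)).
  { unfold J. unfold Rminus. apply CV_plus.
    - unfold Rdiv. apply CV_mult; [|apply Un_cv_const]. simpl.
      apply CV_mult; [apply hnorm_cv; auto|]. apply CV_mult; [apply hnorm_cv; auto|apply Un_cv_const].
    - apply CV_opp. apply Un_cv_intro. intros eps Heps.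
      destruct (norm_cv_small ws z Hz (eps / (L + 1))) as [N HN]. { apply Rdiv_lt_0_compat; lra. }
      exists N. intros n Hn. specialize (HN n Hn).
      assert (Wd : W (hsub (ws n) z)).
      { unfold hsub. apply Wadd; [apply (Hws n)|]. replace (hopp z) with (hscal (-1) z) by veq. apply Wscal; auto. }
      assert (Ed : l (ws n) = l z + l (hsub (ws n) z)).
      { rewrite <- ladd by auto. f_equal. veq. }
      specialize (lbd _ Wd).
      assert (L * hnorm (hsub (ws n) z) <= L * (eps / (L + 1))) by (apply Rmult_le_compat_l; lra).
      assert (L * (eps / (L + 1)) < eps).
      { apply (Rmult_lt_reg_r (L + 1)); [lra|]. replace (L * (eps / (L + 1)) * (L + 1)) with (L * eps) by (field; lra). nra. }
      assert (Habs : Rabs (l (hsub (ws n) z)) < eps) by lra.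
      apply Rabs_def2 in Habs. lra. }
  assert (Jz : J z <= - s).
  { apply (Rle_cv_lim (fun k => Rlt_le _ _ (proj2 (Hws k))) HJ).
    assert (E0 : Un_cv e 0).
    { unfold e. replace 0 with (0 * 0 / 8) by field. unfold Rdiv. apply CV_mult; [|apply Un_cv_const].
      replace (fun k => ((/ 2) ^ k) ^ 2) with (fun k => (1 * (/ 2) ^ k) * (1 * (/ 2) ^ k)) by (apply functional_extensionality; intro; ring).
      apply CV_mult; apply half_pow_cv. }
    pose proof (CV_plus _ _ _ _ (Un_cv_const (-s)) E0) as X. rewrite Rplus_0_r in X. exact X. }
  exists z. split; auto. intros w Hw.
  assert (Q : forall t, 0 <= t * (hinner z w - l w) + t ^ 2 * (hnorm w ^ 2 / 2)).
  { intro t. pose proof (Jge _ (Wadd _ _ Wz (Wscal t w Hw))) as G.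
    unfold J in G, Jz. rewrite ladd, lscal in G by auto. rewrite !hnorm_sq in *.
    autorewrite with ip in G. ipnorm. rewrite (hinner_sym w z) in G. nra. }
  apply quad_zero in Q. lra. pose proof (pow2_ge_0 (hnorm w)). lra.
Qed.
Lemma bw_sub (u : nat -> R) K : (forall n, Rabs (u n) <= K) ->
  exists g : nat -> nat, (forall N, (N <= g N)%nat) /\ exists l, Un_cv (fun n => u (g n)) l.
Proof.
  intro Hb. destruct (Bolzano_Weierstrass u (fun c => - K <= c <= K) (compact_P3 (-K) K)) as [l Hl].
  { intro n. specialize (Hb n). pose proof (Rle_abs (u n)). pose proof (Rle_abs (- u n)). rewrite Rabs_Ropp in *. lra. }
  assert (Hall : forall N, exists p, (N <= p)%nat /\ Rabs (u p - l) < t0 N).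
  { intro N. destruct (Hl (fun y => Rabs (y - l) < t0 N) N) as [p [Hp Hv]].
    - exists (mkposreal (t0 N) (t0_pos N)). intros y Hy. exact Hy.
    - exists p. auto. }
  apply fchoice in Hall. destruct Hall as [g Hg]. exists g. split; [intro N; apply (Hg N)|].
  exists l. apply Un_cv_intro. intros eps He. destruct (Un_cv_small t0 0 t0_cv eps He) as [N HN].
  exists N. intros n Hn. specialize (HN n Hn). destruct (Hg n) as [_ A]. apply Rabs_def2 in A. lra.
Qed.

Definition bwsel (u : nat -> R) : nat -> nat :=
  epsilon (inhabits (fun n : nat => n)) (fun g => (forall N, (N <= g N)%nat) /\ exists l, Un_cv (fun n => u (g n)) l).

Lemma bwsel_spec (u : nat -> R) K : (forall n, Rabs (u n) <= K) ->
  (forall N, (N <= bwsel u N)%nat) /\ exists l, Un_cv (fun n => u (bwsel u n)) l.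
Proof. intro Hb. unfold bwsel. apply epsilon_spec. apply (bw_sub u K Hb). Qed.

Fixpoint sigx (a : nat -> nat -> R) (m : nat) : nat -> nat :=
  match m with
  | O => fun n => n
  | S m' => fun n => sigx a m' (bwsel (fun k => a m' (sigx a m' k)) n)
  end.

Lemma sigx_comp (a : nat -> nat -> R) (K : nat -> R) : (forall m n, Rabs (a m n) <= K m) ->
  forall m j n, exists p, (n <= p)%nat /\ sigx a (m + j) n = sigx a m p.
Proof.
  intros Hb m j. induction j as [|j IH]; intro n.
  - exists n. rewrite Nat.add_0_r. auto.
  - rewrite Nat.add_succ_r. simpl.
    destruct (bwsel_spec (fun k => a (m + j)%nat (sigx a (m + j) k)) (K (m + j)%nat) (fun k => Hb _ _)) as [Hge _].
    destruct (IH (bwsel (fun k => a (m + j)%nat (sigx a (m + j) k)) n)) as [p [Hp Ep]].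
    exists p. split; [specialize (Hge n); lia| auto].
Qed.

Lemma diag_extract (a : nat -> nat -> R) (K : nat -> R) : (forall m n, Rabs (a m n) <= K m) ->
  exists g : nat -> nat, (forall N, (N <= g N)%nat) /\ forall m, exists l, Un_cv (fun k => a m (g k)) l.
Proof.
  intro Hb. exists (fun k => sigx a k k). split.
  - intro N. destruct (sigx_comp a K Hb 0 N N) as [p [Hp Ep]]. simpl in Ep. rewrite Ep. exact Hp.
  - intro m.
    destruct (bwsel_spec (fun k => a m (sigx a m k)) (K m) (fun k => Hb _ _)) as [_ [l Hl]].
    exists l. apply Un_cv_intro. intros eps He. destruct (Un_cv_small _ _ Hl eps He) as [N HN].
    exists (S m + N)%nat. intros k Hk.
    destruct (sigx_comp a K Hb (S m) (k - S m) k) as [p [Hp Ep]].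
    replace (S m + (k - S m))%nat with k in Ep by lia. rewrite Ep. simpl. apply HN. lia.
Qed.
Inductive inspan {H : HilbertSpace} (z : nat -> H) : H -> Prop :=
| sp0 : inspan z hzero
| spz : forall m, inspan z (z m)
| spadd : forall u v, inspan z u -> inspan z v -> inspan z (hadd u v)
| spscal : forall a u, inspan z u -> inspan z (hscal a u).

Definition clspan {H : HilbertSpace} (z : nat -> H) (u : H) : Prop :=
  forall eps, 0 < eps -> exists v, inspan z v /\ hnorm (hsub u v) < eps.

Lemma inspan_cl {H : HilbertSpace} (z : nat -> H) u : inspan z u -> clspan z u.
Proof.
  intros Hu eps He. exists u. split; auto. replace (hsub u u) with (@hzero H) by veq. rewrite hnorm_zero. lra.
Qed.

Lemma clspan_csub {H : HilbertSpace} (z : nat -> H) : csub (clspan z).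
Proof.
  split; [|split; [|split]].
  - apply inspan_cl. constructor.
  - intros u v Hu Hv eps He. destruct (Hu (eps/2) ltac:(lra)) as [u' [Hu' Au]]. destruct (Hv (eps/2) ltac:(lra)) as [v' [Hv' Av]].
    exists (hadd u' v'). split; [constructor; auto|].
    replace (hsub (hadd u v) (hadd u' v')) with (hadd (hsub u u') (hsub v v')) by veq.
    pose proof (hnorm_triangle (hsub u u') (hsub v v')). lra.
  - intros a u Hu eps He. destruct (Hu (eps / (Rabs a + 1))) as [u' [Hu' Au]].
    { apply Rdiv_lt_0_compat; [lra|pose proof (Rabs_pos a); lra]. }
    exists (hscal a u'). split; [constructor; auto|].
    replace (hsub (hscal a u) (hscal a u')) with (hscal a (hsub u u')) by veq. rewrite hnorm_scal.
    pose proof (Rabs_pos a). pose proof (hnorm_ge0 (hsub u u')).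
    assert (Rabs a * hnorm (hsub u u') <= Rabs a * (eps / (Rabs a + 1))) by (apply Rmult_le_compat_l; lra).
    assert (Rabs a * (eps / (Rabs a + 1)) < eps).
    { apply (Rmult_lt_reg_r (Rabs a + 1)); [lra|]. replace (Rabs a * (eps / (Rabs a + 1)) * (Rabs a + 1)) with (Rabs a * eps) by (field; lra). nra. }
    lra.
  - intros u Hu eps He. destruct (Hu (eps/2) ltac:(lra)) as [w [Hw Aw]].
    destruct (Hw (eps/2) ltac:(lra)) as [v [Hv Av]]. exists v. split; auto.
    pose proof (hnorm_sub_tri u w v). lra.
Qed.

Lemma wc_span {H : HilbertSpace} (z y : nat -> H) :
  (forall m, exists l, Un_cv (fun k => hinner (y k) (z m)) l) ->
  forall v, inspan z v -> exists l, Un_cv (fun k => hinner (y k) v) l.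
Proof.
  intros Hm v Hv. induction Hv as [|m|u v Hu IHu Hv IHv|a u Hu IHu].
  - exists 0. replace (fun k => hinner (y k) hzero) with (fun _ : nat => 0).
    + apply Un_cv_const.
    + apply functional_extensionality. intro. rewrite hinner_zero_r. reflexivity.
  - apply Hm.
  - destruct IHu as [l1 H1]. destruct IHv as [l2 H2]. exists (l1 + l2).
    replace (fun k => hinner (y k) (hadd u v)) with (fun k => hinner (y k) u + hinner (y k) v).
    + apply CV_plus; auto.
    + apply functional_extensionality. intro. rewrite hinner_add_r. reflexivity.
  - destruct IHu as [l1 H1]. exists (a * l1).
    replace (fun k => hinner (y k) (hscal a u)) with (fun k => a * hinner (y k) u).
    + apply Un_cv_scal; auto.
    + apply functional_extensionality. intro. rewrite hinner_scal_r. reflexivity.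
Qed.

Lemma wc_cl {H : HilbertSpace} (z y : nat -> H) B :
  0 <= B -> (forall k, hnorm (y k) <= B) ->
  (forall m, exists l, Un_cv (fun k => hinner (y k) (z m)) l) ->
  forall u, clspan z u -> exists l, Un_cv (fun k => hinner (y k) u) l.
Proof.
  intros HB Hy Hm u Hu.
  assert (Cc : Cauchy_crit (fun k => hinner (y k) u)).
  { intros eps He. destruct (Hu (eps / (4 * B + 1))) as [v [Hv Av]]. { apply Rdiv_lt_0_compat; lra. }
    destruct (wc_span z y Hm v Hv) as [l Hl].
    destruct (Un_cv_small _ _ Hl (eps / 4) ltac:(lra)) as [N HN]. exists N. intros n k Hn Hk.
    unfold Rdist.
    assert (E : hinner (y n) u - hinner (y k) u = (hinner (y n) v - hinner (y k) v) + hinner (hsub (y n) (y k)) (hsub u v)).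
    { unfold hsub. autorewrite with ip. ring. }
    rewrite E. eapply Rle_lt_trans; [apply Rabs_triang|].
    specialize (HN n Hn) as A1. specialize (HN k Hk) as A2.
    assert (Rabs (hinner (y n) v - hinner (y k) v) < eps / 2) by (apply Rabs_def1; lra).
    pose proof (cauchy_schwarz (hsub (y n) (y k)) (hsub u v)).
    pose proof (hnorm_sub_tri (y n) hzero (y k)) as Tr.
    replace (hsub (y n) hzero) with (y n) in Tr by veq. replace (hsub hzero (y k)) with (hopp (y k)) in Tr by veq.
    rewrite hnorm_opp in Tr. pose proof (Hy n). pose proof (Hy k).
    pose proof (hnorm_ge0 (hsub (y n) (y k))). pose proof (hnorm_ge0 (hsub u v)).
    assert (hnorm (hsub (y n) (y k)) * hnorm (hsub u v) <= (2 * B) * (eps / (4 * B + 1))) by (apply Rmult_le_compat; lra).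
    assert ((2 * B) * (eps / (4 * B + 1)) < eps / 2).
    { apply (Rmult_lt_reg_r (4 * B + 1)); [lra|].
      replace (2 * B * (eps / (4 * B + 1)) * (4 * B + 1)) with (2 * B * eps) by (field; lra). nra. }
    lra. }
  destruct (R_complete _ Cc) as [l Hl]. exists l. exact Hl.
Qed.

Lemma weak_compact {H : HilbertSpace} (z : nat -> H) B :
  (forall n, hnorm (z n) <= B) ->
  exists g : nat -> nat, (forall N, (N <= g N)%nat) /\ exists w, weak_cv (fun n => z (g n)) w.
Proof.
  intro Hz.
  assert (HB : 0 <= B) by (pose proof (Hz O); pose proof (hnorm_ge0 (z O)); lra).
  destruct (diag_extract (fun m n => hinner (z n) (z m)) (fun m => B * hnorm (z m))) as [g [Hg Hcv]].
  { intros m n. eapply Rle_trans; [apply cauchy_schwarz|]. apply Rmult_le_compat_r; [apply hnorm_ge0|auto]. }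
  set (y := fun k => z (g k)).
  assert (Hy : forall k, hnorm (y k) <= B) by (intro; apply Hz).
  set (W := clspan z).
  assert (CW : csub W) by apply clspan_csub.
  assert (Hl : forall u, W u -> exists l, Un_cv (fun k => hinner (y k) u) l).
  { apply (wc_cl z y B HB Hy). intro m. apply (Hcv m). }
  set (ell := fun u => epsilon (inhabits 0) (fun l => Un_cv (fun k => hinner (y k) u) l)).
  assert (Hell : forall u, W u -> Un_cv (fun k => hinner (y k) u) (ell u)).
  { intros u Hu. unfold ell. apply epsilon_spec. apply Hl; auto. }
  destruct CW as [W0 [Wadd [Wscal Wcl]]].
  assert (LW : linW W ell B).
  { split; [|split].
    - intros u v Hu Hv. apply (UL_sequence (fun k => hinner (y k) (hadd u v))); [apply Hell; auto|].
      replace (fun k => hinner (y k) (hadd u v)) with (fun k => hinner (y k) u + hinner (y k) v).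
      + apply CV_plus; apply Hell; auto.
      + apply functional_extensionality. intro. rewrite hinner_add_r. reflexivity.
    - intros a u Hu. apply (UL_sequence (fun k => hinner (y k) (hscal a u))); [apply Hell; auto|].
      replace (fun k => hinner (y k) (hscal a u)) with (fun k => a * hinner (y k) u).
      + apply Un_cv_scal. apply Hell; auto.
      + apply functional_extensionality. intro. rewrite hinner_scal_r. reflexivity.
    - intros u Hu. pose proof (Hell u Hu) as X.
      assert (Hb : forall k, Rabs (hinner (y k) u) <= B * hnorm u).
      { intro k. eapply Rle_trans; [apply cauchy_schwarz|]. apply Rmult_le_compat_r; [apply hnorm_ge0|auto]. }
      apply Rabs_le. split.
      + apply (Rle_cv_lim (Un := fun _ => - (B * hnorm u)) (Vn := fun k => hinner (y k) u)); auto.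
        * intro k. specialize (Hb k). pose proof (Rle_abs (- hinner (y k) u)). rewrite Rabs_Ropp in H0. lra.
        * apply Un_cv_const.
      + apply (Rle_cv_lim (Un := fun k => hinner (y k) u) (Vn := fun _ => B * hnorm u)); auto.
        * intro k. specialize (Hb k). pose proof (Rle_abs (hinner (y k) u)). lra.
        * apply Un_cv_const. }
  destruct (riesz_W W ell B (conj W0 (conj Wadd (conj Wscal Wcl))) LW HB) as [zs [Wzs Hzs]].
  exists g. split; auto. exists zs. intro v.
  assert (LV : linW W (fun w => hinner v w) (hnorm v)).
  { split; [|split].
    - intros. apply hinner_add_r.
    - intros. apply hinner_scal_r.
    - intros u _. apply cauchy_schwarz. }
  destruct (riesz_W W (fun w => hinner v w) (hnorm v) (conj W0 (conj Wadd (conj Wscal Wcl))) LV (hnorm_ge0 v)) as [pv [Wpv Hpv]].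
  assert (Wy : forall k, W (z (g k))) by (intro k; apply inspan_cl; apply spz).
  replace (fun k => hinner (z (g k)) v) with (fun k => hinner (y k) pv).
  2: { apply functional_extensionality. intro k. unfold y.
        assert (E : hinner v (z (g k)) = hinner pv (z (g k))) by (apply Hpv; apply (Wy k)).
        rewrite (hinner_sym (z (g k)) v), (hinner_sym (z (g k)) pv). auto. }
  replace (hinner zs v) with (ell pv).
  - apply Hell; auto.
  - rewrite Hzs by auto. rewrite (hinner_sym zs v), Hpv by auto. apply hinner_sym.
Qed.
Lemma prox_near {H : HilbertSpace} (f : H -> ereal) lam xbar :
  Setting f lam xbar -> lsc f ->
  exists d0, 0 < d0 /\ forall x0 rho, 0 < rho -> hnorm (hsub x0 xbar) + rho < d0 ->
    exists x z, hnorm (hsub x x0) <= rho / 2 /\ prox_subdiff f x z.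
Proof.
  intros S Hlsc. pose proof S as [Hl [Hpc [Hc Hp]]].
  pose proof (all_fin f lam xbar Hl Hpc Hc) as Hfin.
  destruct (prox_fv f lam xbar xbar hzero Hl Hpc Hc Hp) as [sg [dl [Hsg [Hdl B]]]].
  exists dl. split; auto. intros x0 rho Hr Hx.
  set (m := fv f xbar - sg / 2 * dl ^ 2).
  assert (Hm : forall y, hnorm (hsub y x0) <= rho -> m <= fv f y).
  { intros y Hy. assert (Hyx : hnorm (hsub y xbar) < dl) by (pose proof (hnorm_sub_tri y x0 xbar); lra).
    specialize (B y Hyx). rewrite hinner_zero_l in B. unfold m.
    pose proof (hnorm_ge0 (hsub y xbar)).
    assert (hnorm (hsub y xbar) ^ 2 <= dl ^ 2) by (apply pow_incr; lra). nra. }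
  assert (Hm0 : m <= fv f x0).
  { apply Hm. replace (hsub x0 x0) with (@hzero H) by veq. rewrite hnorm_zero. lra. }
  set (eta := rho / 2). set (c0 := (fv f x0 - m + 1) / eta ^ 2).
  assert (He : 0 < eta) by (unfold eta; lra).
  assert (Hc0 : 0 < c0) by (unfold c0; apply Rdiv_lt_0_compat; [lra| apply pow_lt; lra]).
  apply (BP_main f x0 rho c0 eta m Hlsc); [|unfold eta; lra].
  split; auto. split; auto. split; auto. split; auto. split; auto.
  unfold c0. replace ((fv f x0 - m + 1) / eta ^ 2 * eta ^ 2) with (fv f x0 - m + 1) by (field; lra). lra.
Qed.

Lemma dens {H : HilbertSpace} (f : H -> ereal) lam xbar :
  Setting f lam xbar -> lsc f -> forall h, exists z, T_M f xbar hzero h z.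
Proof.
  intros S Hlsc h. pose proof S as [Hl [Hpc [Hc Hp]]].
  destruct (prox_near f lam xbar S Hlsc) as [d0 [Hd0 PN]].
  destruct (F_lower f lam xbar S) as [sg [dl [Hsg [Hdl FL]]]].
  set (A := hnorm h). assert (HA : 0 <= A) by apply hnorm_ge0.
  set (tau := Rmin (Rmin (d0 / (2 * (A + 1))) (dl / (2 * (A + 3)))) (1/2)).
  assert (Htau1 : tau <= d0 / (2 * (A + 1))) by (eapply Rle_trans; [apply Rmin_l|apply Rmin_l]).
  assert (Htau2 : tau <= dl / (2 * (A + 3))) by (eapply Rle_trans; [apply Rmin_l|apply Rmin_r]).
  assert (Htau3 : tau <= 1/2) by apply Rmin_r.
  assert (Htau0 : 0 < tau).
  { unfold tau. apply Rmin_pos; [apply Rmin_pos|]; try lra; apply Rdiv_lt_0_compat; lra. }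
  set (t := fun n => tau * t0 n).
  assert (Ht : forall n, 0 < t n) by (intro n; unfold t; apply Rmult_lt_0_compat; [lra|apply t0_pos]).
  assert (Ht1 : forall n, t n <= tau).
  { intro n. unfold t. assert (t0 n <= 1).
    { unfold t0. rewrite <- Rinv_1. apply Rinv_le_contravar; [lra|]. rewrite S_INR. pose proof (pos_INR n). lra. }
    pose proof (t0_pos n). nra. }
  assert (Htc : Un_cv t 0) by (unfold t; replace 0 with (tau * 0) by ring; apply Un_cv_scal, t0_cv).
  assert (Hpts : forall n, exists p : H * H, hnorm (hsub (fst p) (hadd xbar (hscal (t n) h))) <= t n ^ 2 / 2 /\
                                     prox_subdiff f (fst p) (snd p)).
  { intro n. destruct (PN (hadd xbar (hscal (t n) h)) (t n ^ 2)) as [x [z [Hx Hxz]]].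
    - apply pow_lt. apply Ht.
    - replace (hsub (hadd xbar (hscal (t n) h)) xbar) with (hscal (t n) h) by veq.
      rewrite hnorm_scal, Rabs_right by (left; apply Ht). fold A.
      specialize (Ht n). specialize (Ht1 n).
      assert (t n * A + t n ^ 2 <= tau * (A + 1)) by nra.
      assert (tau * (A + 1) < d0).
      { apply (Rle_lt_trans _ (d0 / (2 * (A + 1)) * (A + 1))). apply Rmult_le_compat_r; lra.
        replace (d0 / (2 * (A + 1)) * (A + 1)) with (d0 / 2) by (field; lra). lra. }
      lra.
    - exists (x, z). simpl. auto. }
  apply fchoice in Hpts. destruct Hpts as [pts Hpts].
  set (hn := fun n => hscal (/ t n) (hsub (fst (pts n)) xbar)).
  set (zn := fun n => hscal (/ t n) (snd (pts n))).
  assert (Ex : forall n, hadd xbar (hscal (t n) (hn n)) = fst (pts n)).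
  { intro n. unfold hn. specialize (Ht n). apply vec_eq. unfold hsub. autorewrite with ip. ipnorm. field. lra. }
  assert (Ez : forall n, hadd hzero (hscal (t n) (zn n)) = snd (pts n)).
  { intro n. unfold zn. specialize (Ht n). apply vec_eq. unfold hsub. autorewrite with ip. ipnorm. field. lra. }
  assert (Hprox : forall n, prox_subdiff f (hadd xbar (hscal (t n) (hn n))) (hadd hzero (hscal (t n) (zn n)))).
  { intro n. rewrite Ex, Ez. apply (Hpts n). }
  assert (Hhn : forall n, hnorm (hsub (hn n) h) <= t n / 2).
  { intro n. destruct (Hpts n) as [B _]. specialize (Ht n).
    replace (hsub (hn n) h) with (hscal (/ t n) (hsub (fst (pts n)) (hadd xbar (hscal (t n) h)))).
    2: { unfold hn. apply vec_eq. unfold hsub. autorewrite with ip. ipnorm. field. lra. }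
    rewrite hnorm_scal, Rabs_right by (left; apply Rinv_0_lt_compat; lra).
    apply (Rmult_le_reg_l (t n)); [lra|]. rewrite <- Rmult_assoc, Rinv_r by lra.
    replace (t n * (t n / 2)) with (t n ^ 2 / 2) by field. lra. }
  set (kap := Rmin lam 1).
  assert (Hkap : 0 < kap) by (unfold kap; apply Rmin_pos; lra).
  assert (Hkl : kap <= lam) by apply Rmin_l. assert (Hk1 : kap <= 1) by apply Rmin_r.
  set (K := (A + 1) ^ 2 / lam + sg * (A + 2) ^ 2).
  assert (Hbd : forall n, hnorm (zn n) <= K / kap + 1).
  { intro n. set (Z := hnorm (zn n)). assert (HZ : 0 <= Z) by apply hnorm_ge0.
    set (a := kap / (1 + Z)).
    assert (Ha : 0 < a) by (unfold a; apply Rdiv_lt_0_compat; lra).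
    assert (HaZ : a * Z <= kap).
    { unfold a. apply (Rmult_le_reg_r (1 + Z)); [lra|].
      replace (kap / (1 + Z) * Z * (1 + Z)) with (kap * Z) by (field; lra). nra. }
    assert (Hak : a <= kap).
    { unfold a. apply (Rmult_le_reg_r (1 + Z)); [lra|].
      replace (kap / (1 + Z) * (1 + Z)) with kap by (field; lra). nra. }
    set (w := hsub (hn n) (hscal a (zn n))).
    assert (Hhn1 : hnorm (hn n) <= A + 1).
    { pose proof (hnorm_triangle (hsub (hn n) h) h). replace (hadd (hsub (hn n) h) h) with (hn n) in H0 by veq.
      fold A in H0. specialize (Hhn n). specialize (Ht1 n). lra. }
    assert (Hw : hnorm w <= A + 2).
    { unfold w. unfold hsub. pose proof (hnorm_triangle (hn n) (hopp (hscal a (zn n)))). rewrite hnorm_opp, hnorm_scal, Rabs_right in H0 by lra.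
      fold Z in H0. lra. }
    assert (Ftw : t n * hnorm w < dl).
    { specialize (Ht n). specialize (Ht1 n).
      apply (Rle_lt_trans _ (tau * (A + 2))). { pose proof (hnorm_ge0 w). apply Rmult_le_compat; lra. }
      apply (Rle_lt_trans _ (dl / (2 * (A + 3)) * (A + 2))). { apply Rmult_le_compat_r; lra. }
      apply (Rmult_lt_reg_r (2 * (A + 3))); [lra|].
      replace (dl / (2 * (A + 3)) * (A + 2) * (2 * (A + 3))) with (dl * (A + 2)) by (field; lra). nra. }
    pose proof (FL (t n) w (Ht n) Ftw) as L1.
    pose proof (F_upper f lam xbar (t n) (hn n) S (Ht n)) as U1.
    pose proof (F_star f lam xbar (t n) (hn n) (zn n) S (Ht n) (Hprox n) w) as St.
    replace (hsub w (hn n)) with (hscal (- a) (zn n)) in St by (unfold w; veq).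
    rewrite hinner_scal_r, hnorm_scal, Rabs_left1 in St by lra.
    rewrite <- hnorm_sq' in St. fold Z in St.
    assert (Ehn : hnorm (hn n) ^ 2 <= (A + 1) ^ 2) by (apply pow_incr; split; [apply hnorm_ge0|lra]).
    assert (Ew : hnorm w ^ 2 <= (A + 2) ^ 2) by (apply pow_incr; split; [apply hnorm_ge0|lra]).
    assert (U2 : hnorm (hn n) ^ 2 / lam <= (A + 1) ^ 2 / lam) by (apply Rmult_le_compat_r; [left; apply Rinv_0_lt_compat; lra|lra]).
    assert (L2 : - sg * (A + 2) ^ 2 <= - sg * hnorm w ^ 2) by nra.
    assert (Q : (- - a * Z) ^ 2 / lam <= a * (Z * Z)).
    { replace ((- - a * Z) ^ 2 / lam) with (a * (Z * Z) * (a / lam)) by (field; lra).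
      assert (a / lam <= 1) by (apply (Rmult_le_reg_r lam); [lra|]; replace (a / lam * lam) with a by (field; lra); lra).
      assert (0 <= a * (Z * Z)) by (apply Rmult_le_pos; nra). nra. }
    assert (M : a * (Z * Z) <= K) by (unfold K; lra).
    assert (M2 : kap * (Z - 1) <= a * (Z * Z)).
    { unfold a. replace (kap / (1 + Z) * (Z * Z)) with (kap * (Z * Z / (1 + Z))) by (field; lra).
      apply Rmult_le_compat_l; [lra|]. apply (Rmult_le_reg_r (1 + Z)); [lra|].
      replace (Z * Z / (1 + Z) * (1 + Z)) with (Z * Z) by (field; lra). nra. }
    assert (kap * (Z - 1) <= K) by lra.
    apply (Rmult_le_reg_l kap); [lra|]. replace (kap * (K / kap + 1)) with (K + kap) by (field; lra). lra. }
  destruct (weak_compact zn (K / kap + 1) Hbd) as [g [Hg [w Hw]]].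
  exists w. exists (fun n => t (g n)), (fun n => hn (g n)), (fun n => zn (g n)).
  split; [intro; apply Ht|]. split; [apply cv_sub; auto|]. split; [|split; [exact Hw|intro; apply Hprox]].
  apply norm_cv_sub; auto. apply norm_cv_intro. intros eps He.
  destruct (Un_cv_small t 0 Htc eps He) as [N HN]. exists N. intros n Hn. specialize (HN n Hn). specialize (Hhn n).
  specialize (Ht n). lra.
Qed.
Theorem theorem4p3 (H : HilbertSpace) (f : H -> ereal) (xbar : H) :
  proper f -> lsc f -> paraconcave f ->
  in_dom f xbar ->
  prox_subdiff f xbar hzero ->
  continuous_at f xbar ->
  twice_epi_diff_mosco f xbar hzero ->
  (exists a b, qri2 (N_M f xbar hzero) a b) ->
  (forall b : H, exists a : H, N_M f xbar hzero a b) ->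
  (SOC_first f xbar <-> SOC_second f xbar) /\
  (SOC_second f xbar <-> SOC_third f xbar).
Proof.
  intros _ Hlsc [lam [Hl Hpc]] _ Hp Hc [phi [_ HM]] _ Proj.
  assert (S : Setting f lam xbar) by (split; [|split; [|split]]; auto).
  apply (main_with_dens f lam xbar phi S HM (dens f lam xbar S Hlsc) Proj).
Qed.
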